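(* For every $j\in\{0,\dots,m-1\}$ and every $k\ge1$, $$\mathcal L_\Delta^{k}(h_j)=\Big(\int_{\Omega_{j+k \bmod m}}\mathcal L_\Delta^{k}(\mathbf 1)\,d\nu_{j+k \bmod m}\Big)\,h_{j+k \bmod m}.$$
   Context: Let $\mathcal V=\{1,\dots,\ell\}$ and let $A$ be an irreducible aperiodic $\{0,1\}$-matrix. Let $\Sigma_A^+=\{x\in\mathcal V^{\mathbb N}: A(x_{i-1},x_i)=1\ \forall i\ge1\}$ with the shift $T(x)_n=x_{n+1}$. Potential. Let $\phi$ be a real Hölder continuous function, normalised so that $\mathcal L_\phi\mathbf 1=\mathbf 1$, where $(\mathcal L_\phi\psi)(x)=\sum_{Ty=x}e^{\phi(y)}\psi(y)$. Subsystem. Let $\Delta\subsetneq\mathcal V$ with $\Sigma_\Delta=\{x: x_i\in\Delta\ \forall i\}$, such that the restriction of $A$ to $\Delta\times\Delta$ is irreducible with period $m\ge2$. Let $\Delta=\Delta_0\cup\dots\cup\Delta_{m-1}$ be the cyclic decomposition into disjoint sets such that $i\in\Delta_s$, $i'\in\Delta_{s'}$ and $A(i,i')=1$ imply $s'\equiv s+1\pmod m$. Indices are taken mod $m$. Define $\Omega_j=\{x\in\Sigma_\Delta: x_0\in\Delta_j\}$. Let $P_\Delta$ be the pressure of $\phi|_{\Sigma_\Delta}$ with respect to $T|_{\Sigma_\Delta}$. Operators. Define $\mathcal L_\Delta\psi=\mathcal L_\phi(\psi\chi_\Delta)$, where $\chi_\Delta$ is the indicator of $\{x_0\in\Delta\}$.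 Write $S_m\phi=\sum_{i=0}^{m-1}\phi\circ T^i$, and define $(\mathcal L^{(m)}_j\psi)(x)=\sum e^{S_m\phi(y)}\psi(y)$ over $y$ with $T^my=x$ and $y_s\in\Delta_{j+s}$ for $0\le s\le m-1$. Functions $h_j$. Let $h_j=\lim_n e^{-nmP_\Delta}(\mathcal L^{(m)}_j)^n\mathbf 1$ (a uniform limit on $\Sigma_A^+$). Measures $\nu_j$. Let $\nu_j$ be the unique Borel probability supported on $\Omega_j$ with $\int\mathcal L^{(m)}_j\psi\,d\nu_j=e^{mP_\Delta}\int\psi\,d\nu_j$ for all continuous $\psi$. *)

(* Defs.v *)
From Stdlib Require Import Reals Lra Lia List Arith Bool ClassicalEpsilon.
Import ListNotations.
Open Scope R_scope.

(* Alphabet V = {0,...,l-1} (the paper's {1,...,l}, shifted by one).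
   Points of the one-sided shift are sequences nat -> nat. *)
Definition seqn := nat -> nat.

Definition shift (x : seqn) : seqn := fun n => x (S n).

Definition prep (w : list nat) (x : seqn) : seqn :=
  fun i => if Nat.ltb i (length w) then nth i w 0%nat else x (i - length w)%nat.

Definition agree (x y : seqn) (N : nat) : Prop := forall i, (i < N)%nat -> x i = y i.

Definition InSigmaA (l : nat) (A : nat -> nat -> bool) (x : seqn) : Prop :=
  forall i, (x i < l)%nat /\ A (x i) (x (S i)) = true.

Definition InSigmaD l A (Delta : nat -> bool) (x : seqn) : Prop :=
  InSigmaA l A x /\ forall i, Delta (x i) = true.

(* Omega_j = { x in Sigma_Delta : x_0 in Delta_j },  Delta_s = {i in Delta : cls i = s} *)
Definition InOmega l A Delta (cls : nat -> nat) (j : nat) (x : seqn) : Prop :=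
  InSigmaD l A Delta x /\ cls (x 0%nat) = j.

Definition path_in (l : nat) (A : nat -> nat -> bool) (D : nat -> bool) (i j n : nat) : Prop :=
  exists w : seqn, w 0%nat = i /\ w n = j /\
    (forall t, (t <= n)%nat -> (w t < l)%nat /\ D (w t) = true) /\
    (forall t, (t < n)%nat -> A (w t) (w (S t)) = true).

Definition irreducible l A (D : nat -> bool) : Prop :=
  forall i j, D i = true -> D j = true -> exists n, (1 <= n)%nat /\ path_in l A D i j n.

Definition is_period l A (D : nat -> bool) (i d : nat) : Prop :=
  (forall n, (1 <= n)%nat -> path_in l A D i i n -> Nat.divide d n) /\
  (forall d', (forall n, (1 <= n)%nat -> path_in l A D i i n -> Nat.divide d' n) ->
              Nat.divide d' d).

Definition fullV (l : nat) : nat -> bool := fun a => Nat.ltb a l.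

Definition aperiodic l A : Prop := forall i, (i < l)%nat -> is_period l A (fullV l) i 1.

Fixpoint lsum {T : Type} (f : T -> R) (L : list T) : R :=
  match L with nil => 0 | a :: L' => f a + lsum f L' end.

Fixpoint words (l n : nat) : list (list nat) :=
  match n with
  | O => [nil]
  | S n' => flat_map (fun a => map (cons a) (words l n')) (seq 0 l)
  end.

Definition birkhoff (phi : seqn -> R) (n : nat) (x : seqn) : R :=
  lsum (fun i => phi (Nat.iter i shift x)) (seq 0 n).

Definition adm (A : nat -> nat -> bool) (w : list nat) (x : seqn) : bool :=
  forallb (fun i => A (prep w x i) (prep w x (S i))) (seq 0 (length w)).

(* generic transfer operator over inverse branches of T^n:
   (psi |-> sum_{y in Sigma_A^+, T^n y = x, cond (y_0..y_{n-1})} e^{S_n phi(y)} psi(y)) *)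
Definition Lgen (l : nat) (A : nat -> nat -> bool) (phi : seqn -> R) (n : nat)
  (cond : list nat -> bool) (psi : seqn -> R) (x : seqn) : R :=
  lsum (fun w => if adm A w x && cond w
                 then exp (birkhoff phi n (prep w x)) * psi (prep w x) else 0)
       (words l n).

Definition Lphi l A phi (psi : seqn -> R) : seqn -> R :=
  Lgen l A phi 1 (fun _ => true) psi.

Definition one : seqn -> R := fun _ => 1.

Definition chi (Delta : nat -> bool) (y : seqn) : R := if Delta (y 0%nat) then 1 else 0.

Definition LDelta l A phi Delta (psi : seqn -> R) : seqn -> R :=
  Lphi l A phi (fun y => psi y * chi Delta y).

Definition Lm l A phi (Delta : nat -> bool) (cls : nat -> nat) (m j : nat)
  (psi : seqn -> R) : seqn -> R :=
  Lgen l A phi m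
    (fun w => forallb (fun s => Delta (nth s w 0%nat) &&
                                Nat.eqb (cls (nth s w 0%nat)) ((j + s) mod m))
                      (seq 0 m)) psi.

Definition opiter (Op : (seqn -> R) -> (seqn -> R)) (k : nat) (psi : seqn -> R) :=
  Nat.iter k Op psi.

(* Hoelder continuity w.r.t. the usual metric d(x,y) = theta^{n(x,y)} *)
Definition holder l A (phi : seqn -> R) : Prop :=
  exists C theta, 0 < theta < 1 /\
    forall x y n, InSigmaA l A x -> InSigmaA l A y -> agree x y n ->
      Rabs (phi x - phi y) <= C * theta ^ n.

Definition cont_on l A (f : seqn -> R) : Prop :=
  forall x eps, InSigmaA l A x -> 0 < eps ->
    exists N, forall y, InSigmaA l A y -> agree x y N -> Rabs (f x - f y) < eps.

Definition sup_of (E : R -> Prop) : R := epsilon (inhabits 0) (fun s => is_lub E s).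

Definition cyl (w : list nat) (x : seqn) : Prop :=
  forall i, (i < length w)%nat -> x i = nth i w 0%nat.

Definition Zn l A Delta (phi : seqn -> R) (n : nat) : R :=
  lsum (fun w =>
    if excluded_middle_informative (exists x, InSigmaD l A Delta x /\ cyl w x)
    then exp (sup_of (fun r => exists x, InSigmaD l A Delta x /\ cyl w x /\
                                         r = birkhoff phi n x))
    else 0) (words l n).

Definition is_pressure l A Delta phi (P : R) : Prop :=
  Un_cv (fun n => ln (Zn l A Delta phi n) / INR n) P.

(* A Borel probability measure on the compact metric space Sigma_A^+, represented
   (Riesz) by its integration functional on continuous functions. *)
Definition prob_functional l A (nu : (seqn -> R) -> R) : Prop :=
  (forall f g, cont_on l A f -> cont_on l A g -> nu (fun x => f x + g x) = nu f + nu g) /\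
  (forall c f, cont_on l A f -> nu (fun x => c * f x) = c * nu f) /\
  (forall f, cont_on l A f -> (forall x, InSigmaA l A x -> 0 <= f x) -> 0 <= nu f) /\
  nu one = 1.

Definition supported_on_Omega l A Delta cls j (nu : (seqn -> R) -> R) : Prop :=
  forall f, cont_on l A f -> (forall x, InOmega l A Delta cls j x -> f x = 0) -> nu f = 0.

(* Main.v *)
Require Import Defs.
From Stdlib Require Import Reals List Arith Lia Lra Bool FunctionalExtensionality ClassicalEpsilon Classical.
Import ListNotations.
Open Scope R_scope.

Lemma lsum_app {T} (f : T -> R) L1 L2 : lsum f (L1 ++ L2) = lsum f L1 + lsum f L2.
Proof. induction L1; simpl; [lra|rewrite IHL1; lra]. Qed.

Lemma lsum_plus {T} (f g : T -> R) L : lsum (fun x => f x + g x) L = lsum f L + lsum g L.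
Proof. induction L; simpl; [lra|rewrite IHL; lra]. Qed.

Lemma lsum_scal {T} (f : T -> R) c L : lsum (fun x => c * f x) L = c * lsum f L.
Proof. induction L; simpl; [lra|rewrite IHL; lra]. Qed.

Lemma lsum_zero {T} (L : list T) : lsum (fun _ => 0) L = 0.
Proof. induction L; simpl; [lra|rewrite IHL; lra]. Qed.

Lemma lsum_ext_in {T} (f g : T -> R) L : (forall x, In x L -> f x = g x) -> lsum f L = lsum g L.
Proof. induction L; simpl; intros H; [lra|]. rewrite H, IHL; auto. Qed.

Lemma lsum_le_in {T} (f g : T -> R) L : (forall x, In x L -> f x <= g x) -> lsum f L <= lsum g L.
Proof. induction L; simpl; intros H; [lra|]. pose proof (H a (or_introl eq_refl)).
  assert (lsum f L <= lsum g L) by (apply IHL; auto). lra. Qed.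

Lemma lsum_nonneg {T} (f : T -> R) L : (forall x, In x L -> 0 <= f x) -> 0 <= lsum f L.
Proof. intros H. apply Rle_trans with (lsum (fun _ => 0) L); [rewrite lsum_zero; lra|]. apply lsum_le_in; auto. Qed.

Lemma lsum_ge_term {T} (f : T -> R) L a : (forall x, In x L -> 0 <= f x) -> In a L -> f a <= lsum f L.
Proof. induction L; simpl; intros H Ha; [tauto|]. destruct Ha as [->|Ha].
 - assert (0 <= lsum f L) by (apply lsum_nonneg; auto). lra.
 - assert (f a <= lsum f L) by (apply IHL; auto). specialize (H a0 (or_introl eq_refl)). lra. Qed.

Lemma lsum_map {T U} (f : U -> R) (g : T -> U) L : lsum f (map g L) = lsum (fun x => f (g x)) L.
Proof. induction L; simpl; [lra|rewrite IHL; lra]. Qed.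

Lemma lsum_flat_map {T U} (f : U -> R) (g : T -> list U) L :
  lsum f (flat_map g L) = lsum (fun a => lsum f (g a)) L.
Proof. induction L; simpl; [lra|rewrite lsum_app, IHL; lra]. Qed.

Lemma lsum_swap {T U} (G : T -> U -> R) L1 L2 :
  lsum (fun a => lsum (fun b => G a b) L2) L1 = lsum (fun b => lsum (fun a => G a b) L1) L2.
Proof. induction L1; simpl.
 - rewrite lsum_zero; lra.
 - rewrite IHL1, <- lsum_plus. reflexivity. Qed.

Lemma lsum_abs {T} (f : T -> R) L : Rabs (lsum f L) <= lsum (fun x => Rabs (f x)) L.
Proof. induction L; simpl. - rewrite Rabs_R0; lra.
 - eapply Rle_trans; [apply Rabs_triang|]. lra. Qed.

Lemma lsum_seq_shift (f : nat -> R) s a : lsum f (seq s a) = lsum (fun i => f (s + i)%nat) (seq 0 a).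
Proof. revert s f; induction a; intros s f; simpl; [lra|].
  rewrite IHa. rewrite (IHa 1%nat). replace (s + 0)%nat with s by lia.
  f_equal. apply lsum_ext_in. intros; f_equal; lia. Qed.

Lemma In_words l n w : In w (words l n) <-> (length w = n /\ forall a, In a w -> (a < l)%nat).
Proof. revert w; induction n; intros w; simpl.
 - split. + intros [<-|[]]; simpl; split; auto; tauto.
   + intros [H _]. destruct w; simpl in *; [auto|lia].
 - rewrite in_flat_map. split.
   + intros [a [Ha Hw]]. rewrite in_map_iff in Hw. destruct Hw as [w' [<- Hw']].
     apply IHn in Hw'. destruct Hw' as [H1 H2]. apply in_seq in Ha. simpl. split; [lia|].
     intros b [<-|Hb]; [lia|auto].
   + intros [H1 H2]. destruct w as [|a w']; simpl in H1; [lia|]. exists a. split.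
     * apply in_seq. specialize (H2 a (or_introl eq_refl)). lia.
     * apply in_map. apply IHn. split; [lia|]. intros; apply H2; simpl; auto. Qed.

Lemma words_app l b a (F : list nat -> R) :
  lsum F (words l (b + a)) = lsum (fun v => lsum (fun u => F (v ++ u)) (words l a)) (words l b).
Proof. revert F; induction b; intros F; simpl.
 - rewrite Rplus_0_r; reflexivity.
 - rewrite !lsum_flat_map. apply lsum_ext_in. intros c _. rewrite !lsum_map.
   rewrite (IHb (fun w => F (c :: w))). reflexivity. Qed.

Lemma iter_shift i (z : seqn) t : Nat.iter i shift z t = z (i + t)%nat.
Proof. revert t; induction i; intros t; simpl; auto. unfold shift at 1. rewrite IHi. f_equal; lia. Qed.

Lemma prep_app v u x : prep (v ++ u) x = prep v (prep u x).
Proof. apply functional_extensionality; intros i. unfold prep. rewrite length_app.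
  destruct (Nat.ltb_spec i (length v)).
  - destruct (Nat.ltb_spec i (length v + length u)); [|lia]. apply app_nth1; auto.
  - destruct (Nat.ltb_spec (i - length v) (length u)).
    + destruct (Nat.ltb_spec i (length v + length u)); [|lia]. apply app_nth2; auto.
    + destruct (Nat.ltb_spec i (length v + length u)); [lia|]. f_equal; lia. Qed.

Lemma iter_shift_prep v y : Nat.iter (length v) shift (prep v y) = y.
Proof. apply functional_extensionality; intros t. rewrite iter_shift. unfold prep.
  destruct (Nat.ltb_spec (length v + t) (length v)); [lia|]. f_equal; lia. Qed.

Lemma prep_nth w x i : (i < length w)%nat -> prep w x i = nth i w 0%nat.
Proof. intros H. unfold prep. destruct (Nat.ltb_spec i (length w)); [auto|lia]. Qed.

Lemma prep_tail w x t : prep w x (length w + t)%nat = x t.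
Proof. unfold prep. destruct (Nat.ltb_spec (length w + t) (length w)); [lia|]. f_equal; lia. Qed.

Lemma birkhoff_app phi b a z :
  birkhoff phi (b + a) z = birkhoff phi b z + birkhoff phi a (Nat.iter b shift z).
Proof. unfold birkhoff. rewrite seq_app, lsum_app. f_equal. simpl.
  rewrite lsum_seq_shift. apply lsum_ext_in. intros i _. f_equal.
  rewrite Nat.add_comm, Nat.iter_add. reflexivity. Qed.

Lemma forallb_ext_in {T} (f g : T -> bool) L : (forall x, In x L -> f x = g x) -> forallb f L = forallb g L.
Proof. induction L; simpl; intros H; auto. rewrite H, IHL; auto. Qed.

Lemma forallb_seq_shift (f : nat -> bool) s a : forallb f (seq s a) = forallb (fun i => f (s + i)%nat) (seq 0 a).
Proof. revert s f; induction a; intros s f; simpl; auto.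
  rewrite IHa, (IHa 1%nat). replace (s+0)%nat with s by lia. f_equal.
  apply forallb_ext_in. intros; f_equal; lia. Qed.

Lemma adm_app A v u x : adm A (v ++ u) x = adm A v (prep u x) && adm A u x.
Proof. unfold adm. rewrite prep_app, length_app, seq_app, forallb_app. f_equal.
  simpl. rewrite forallb_seq_shift. apply forallb_ext_in. intros i _.
  replace (S (length v + i)) with (length v + S i)%nat by lia.
  rewrite !prep_tail. reflexivity. Qed.

Lemma forallb_true_iff_seq (f : nat -> bool) n : forallb f (seq 0 n) = true <-> forall i, (i < n)%nat -> f i = true.
Proof. rewrite forallb_forall. split; intros H i Hi; apply H; apply in_seq in Hi || apply in_seq; lia. Qed.

Definition CP (P : nat -> nat -> bool) n (w : list nat) : bool :=
  forallb (fun s => P s (nth s w 0%nat)) (seq 0 n).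

Definition Qc (b : nat) (P2 P1 : nat -> nat -> bool) : nat -> nat -> bool :=
  fun s c => if Nat.ltb s b then P2 s c else P1 (s - b)%nat c.

Lemma CP_app P1 P2 b a v u : length v = b ->
  CP (Qc b P2 P1) (b + a) (v ++ u) = CP P2 b v && CP P1 a u.
Proof. intros Hv. unfold CP, Qc. rewrite seq_app, forallb_app. f_equal.
  - apply forallb_ext_in. intros s Hs. apply in_seq in Hs.
    destruct (Nat.ltb_spec s b); [|lia]. rewrite app_nth1; [auto|lia].
  - rewrite forallb_seq_shift. apply forallb_ext_in. intros i _. simpl.
    destruct (Nat.ltb_spec (b+i) b); try lia.
    rewrite app_nth2; [|lia]. rewrite Hv.
    replace (b + i - b)%nat with i by lia. reflexivity. Qed.

Lemma Lgen_comp l A phi a b P1 P2 f x :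
  Lgen l A phi a (CP P1 a) (Lgen l A phi b (CP P2 b) f) x =
  Lgen l A phi (b + a) (CP (Qc b P2 P1) (b + a)) f x.
Proof.
  unfold Lgen at 3. rewrite words_app. unfold Lgen at 1.
  transitivity (lsum (fun u => lsum (fun v =>
     if adm A u x && CP P1 a u then exp (birkhoff phi a (prep u x)) *
       (if adm A v (prep u x) && CP P2 b v then exp (birkhoff phi b (prep v (prep u x))) * f (prep v (prep u x)) else 0)
     else 0) (words l b)) (words l a)).
  - apply lsum_ext_in. intros u _. destruct (adm A u x && CP P1 a u).
    + unfold Lgen. rewrite <- lsum_scal. reflexivity.
    + rewrite lsum_zero; reflexivity.
  - rewrite lsum_swap. apply lsum_ext_in. intros v Hv. apply lsum_ext_in. intros u Hu.
    apply In_words in Hv. apply In_words in Hu. destruct Hv as [Hv _]. destruct Hu as [Hu _].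
    rewrite CP_app by auto. rewrite adm_app, prep_app.
    rewrite birkhoff_app. replace (Nat.iter b shift (prep v (prep u x))) with (prep u x)
      by (rewrite <- Hv; symmetry; apply iter_shift_prep).
    destruct (adm A u x); destruct (CP P1 a u); destruct (adm A v (prep u x)); destruct (CP P2 b v);
      simpl; try ring. rewrite exp_plus. ring. Qed.

Lemma Lgen_cond_ext l A phi n C1 C2 f x :
  (forall w, In w (words l n) -> adm A w x = true -> C1 w = C2 w) ->
  Lgen l A phi n C1 f x = Lgen l A phi n C2 f x.
Proof. intros H. unfold Lgen. apply lsum_ext_in. intros w Hw.
  destruct (adm A w x) eqn:E; simpl; auto. rewrite (H w Hw E). reflexivity. Qed.

Lemma CP_ext P Q n w : (forall s c, (s < n)%nat -> P s c = Q s c) -> CP P n w = CP Q n w.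
Proof. intros H. unfold CP. apply forallb_ext_in. intros s Hs. apply in_seq in Hs. apply H. lia. Qed.

Lemma Lgen_lin l A phi n C f g c x :
  Lgen l A phi n C (fun y => f y + c * g y) x = Lgen l A phi n C f x + c * Lgen l A phi n C g x.
Proof. unfold Lgen. rewrite <- lsum_scal, <- lsum_plus. apply lsum_ext_in. intros w _.
  destruct (adm A w x && C w); ring. Qed.

Lemma Lgen_scal l A phi n C f c x :
  Lgen l A phi n C (fun y => c * f y) x = c * Lgen l A phi n C f x.
Proof. unfold Lgen. rewrite <- lsum_scal. apply lsum_ext_in. intros w _.
  destruct (adm A w x && C w); ring. Qed.

Lemma prep_Sigma l A w x n : In w (words l n) -> adm A w x = true -> InSigmaA l A x ->
  InSigmaA l A (prep w x).
Proof. intros Hw Ha Hx. apply In_words in Hw. destruct Hw as [Hlen Hl].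
  unfold adm in Ha. rewrite forallb_forall in Ha. intros i.
  destruct (Nat.lt_ge_cases i (length w)).
  - split.
    + rewrite prep_nth by auto. apply Hl. apply nth_In; auto.
    + apply Ha. apply in_seq. lia.
  - replace i with (length w + (i - length w))%nat by lia.
    replace (S (length w + (i - length w))) with (length w + S (i - length w))%nat by lia.
    rewrite !prep_tail. apply Hx. Qed.

Lemma Lgen_ext_Sigma l A phi n C f g x : (forall y, InSigmaA l A y -> f y = g y) -> InSigmaA l A x ->
  Lgen l A phi n C f x = Lgen l A phi n C g x.
Proof. intros H Hx. unfold Lgen. apply lsum_ext_in. intros w Hw.
  destruct (adm A w x) eqn:E; simpl; auto. rewrite H; auto. eapply prep_Sigma; eauto. Qed.

Lemma Lgen_mono l A phi n C f g x : (forall y, InSigmaA l A y -> f y <= g y) -> InSigmaA l A x ->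
  Lgen l A phi n C f x <= Lgen l A phi n C g x.
Proof. intros H Hx. unfold Lgen. apply lsum_le_in. intros w Hw.
  destruct (adm A w x && C w) eqn:E; [|lra]. apply Rmult_le_compat_l; [left; apply exp_pos|].
  apply H. apply andb_true_iff in E. eapply prep_Sigma; eauto; tauto. Qed.

Lemma Lgen_pos l A phi n C f x : (forall y, InSigmaA l A y -> 0 <= f y) -> InSigmaA l A x ->
  0 <= Lgen l A phi n C f x.
Proof. intros H Hx. unfold Lgen. apply lsum_nonneg. intros w Hw.
  destruct (adm A w x && C w) eqn:E; [|lra]. apply Rmult_le_pos; [left; apply exp_pos|].
  apply H. apply andb_true_iff in E. eapply prep_Sigma; eauto; tauto. Qed.

Lemma Lgen_cond_le l A phi n C f x : (forall y, InSigmaA l A y -> 0 <= f y) -> InSigmaA l A x ->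
  Lgen l A phi n C f x <= Lgen l A phi n (fun _ => true) f x.
Proof. intros H Hx. unfold Lgen. apply lsum_le_in. intros w Hw.
  destruct (adm A w x) eqn:E; simpl; [|lra]. destruct (C w); [lra|].
  apply Rmult_le_pos; [left; apply exp_pos|]. apply H. eapply prep_Sigma; eauto. Qed.

Lemma Lgen_diff l A phi n C f g e x : (forall y, InSigmaA l A y -> Rabs (f y - g y) <= e) -> InSigmaA l A x ->
  Rabs (Lgen l A phi n C f x - Lgen l A phi n C g x) <= e * Lgen l A phi n C one x.
Proof. intros H Hx.
  replace (Lgen l A phi n C f x - Lgen l A phi n C g x) with (Lgen l A phi n C (fun y => f y + (-1) * g y) x)
    by (rewrite Lgen_lin; ring).
  rewrite <- Lgen_scal. unfold Lgen. eapply Rle_trans; [apply lsum_abs|]. apply lsum_le_in.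
  intros w Hw. destruct (adm A w x && C w) eqn:E; [|rewrite Rabs_R0; lra].
  rewrite Rabs_mult, Rabs_pos_eq by (left; apply exp_pos). unfold one.
  replace (e * 1) with e by ring. apply Rmult_le_compat_l; [left; apply exp_pos|].
  replace (f (prep w x) + -1 * g (prep w x)) with (f (prep w x) - g (prep w x)) by ring.
  apply H. apply andb_true_iff in E. eapply prep_Sigma; eauto; tauto. Qed.

Lemma Lgen0 l A phi C f x : Lgen l A phi 0 C f x = if C [] then f x else 0.
Proof. unfold Lgen. simpl. unfold adm. simpl. unfold birkhoff. simpl. rewrite exp_0.
  replace (prep [] x) with x. - destruct (C []); ring.
  - apply functional_extensionality; intros i. unfold prep. simpl. f_equal; lia. Qed.

Definition PD (Delta : nat -> bool) : nat -> nat -> bool := fun _ c => Delta c.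
Definition Pm (Delta : nat -> bool) (cls : nat -> nat) (m j : nat) : nat -> nat -> bool :=
  fun s c => Delta c && Nat.eqb (cls c) ((j + s) mod m).
Definition Ptrue : nat -> nat -> bool := fun _ _ => true.

Lemma CP_true n w : CP Ptrue n w = true.
Proof. unfold CP, Ptrue. apply forallb_forall. auto. Qed.

Lemma LDelta_eq l A phi Delta : LDelta l A phi Delta = Lgen l A phi 1 (CP (PD Delta) 1).
Proof. apply functional_extensionality; intros f. apply functional_extensionality; intros x.
  unfold LDelta, Lphi, Lgen. apply lsum_ext_in. intros w Hw. apply In_words in Hw.
  destruct Hw as [Hw _]. destruct w as [|a [|b w]]; simpl in Hw; try lia.
  unfold CP, PD, chi. simpl. rewrite prep_nth by (simpl; lia). simpl.
  destruct (adm A [a] x); destruct (Delta a); simpl; ring. Qed.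

Lemma opiter_LDelta l A phi Delta k : opiter (LDelta l A phi Delta) k = Lgen l A phi k (CP (PD Delta) k).
Proof. induction k.
  - apply functional_extensionality; intros f. apply functional_extensionality; intros x.
    rewrite Lgen0. reflexivity.
  - apply functional_extensionality; intros f. apply functional_extensionality; intros x.
    change (opiter (LDelta l A phi Delta) (S k) f) with (LDelta l A phi Delta (opiter (LDelta l A phi Delta) k f)).
    rewrite IHk, LDelta_eq, Lgen_comp. replace (S k) with (k + 1)%nat by lia.
    apply Lgen_cond_ext. intros w _ _. apply CP_ext. intros s c _. unfold Qc, PD.
    destruct (s <? k); auto. Qed.

Lemma Lm_eq l A phi Delta cls m j : Lm l A phi Delta cls m j = Lgen l A phi m (CP (Pm Delta cls m j) m).
Proof. reflexivity. Qed.

Lemma opiter_Lm l A phi Delta cls m j n :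
  opiter (Lm l A phi Delta cls m j) n = Lgen l A phi (n * m) (CP (Pm Delta cls m j) (n * m)).
Proof. induction n.
  - apply functional_extensionality; intros f. apply functional_extensionality; intros x.
    rewrite Lgen0. reflexivity.
  - apply functional_extensionality; intros f. apply functional_extensionality; intros x.
    change (opiter (Lm l A phi Delta cls m j) (S n) f) with
      (Lm l A phi Delta cls m j (opiter (Lm l A phi Delta cls m j) n f)).
    rewrite IHn, Lm_eq, Lgen_comp. replace (S n * m)%nat with (n * m + m)%nat by lia.
    apply Lgen_cond_ext. intros w _ _. apply CP_ext. intros s c Hs. unfold Qc, Pm.
    destruct (Nat.ltb_spec s (n * m)); auto. f_equal. f_equal.
    replace (j + s)%nat with ((j + (s - n * m)) + n * m)%nat by lia.
    rewrite Nat.Div0.mod_add. reflexivity. Qed.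

Lemma Lphi_norm_iter l A phi (Hnorm : forall x, InSigmaA l A x -> Lphi l A phi one x = 1) n x :
  InSigmaA l A x -> Lgen l A phi n (fun _ => true) one x = 1.
Proof. revert x. induction n; intros x Hx.
  - rewrite Lgen0. reflexivity.
  - assert (E : forall k, (fun _ : list nat => true) = CP Ptrue k).
    { intros k. apply functional_extensionality; intros w. rewrite CP_true; auto. }
    rewrite (E (S n)). replace (S n) with (n + 1)%nat by lia.
    transitivity (Lgen l A phi 1 (CP Ptrue 1) (Lgen l A phi n (CP Ptrue n) one) x).
    + rewrite Lgen_comp. apply Lgen_cond_ext. intros; rewrite !CP_true.
      unfold CP. symmetry. apply forallb_forall. intros. unfold Qc, Ptrue. destruct (_ <? _); auto.
    + rewrite <- (Hnorm x Hx). unfold Lphi. rewrite <- E. apply Lgen_ext_Sigma; auto.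
      intros y Hy. rewrite <- E. apply IHn; auto. Qed.

Lemma Lgen_one_le1 l A phi (Hnorm : forall x, InSigmaA l A x -> Lphi l A phi one x = 1) n C x :
  InSigmaA l A x -> Lgen l A phi n C one x <= 1.
Proof. intros Hx. rewrite <- (Lphi_norm_iter l A phi Hnorm n x Hx). apply Lgen_cond_le; auto.
  intros; unfold one; lra. Qed.

Lemma adm_step A w x s : adm A w x = true -> (S s < length w)%nat ->
  A (nth s w 0%nat) (nth (S s) w 0%nat) = true.
Proof. intros H Hs. unfold adm in H. rewrite forallb_forall in H.
  specialize (H s). rewrite !prep_nth in H by lia. apply H. apply in_seq. lia. Qed.

Section Cls.
Variables (l : nat) (A : nat -> nat -> bool) (Delta : nat -> bool) (m : nat) (cls : nat -> nat).
Hypothesis Hm : (1 <= m)%nat.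
Hypothesis Hcls_rng : forall i, Delta i = true -> (cls i < m)%nat.
Hypothesis Hcls_cyc : forall i i', Delta i = true -> Delta i' = true -> A i i' = true ->
                cls i' = ((cls i + 1) mod m)%nat.

Lemma cls_prop w x : adm A w x = true -> (forall s, (s < length w)%nat -> Delta (nth s w 0%nat) = true) ->
  forall s, (s < length w)%nat -> cls (nth s w 0%nat) = ((cls (nth 0 w 0%nat) + s) mod m)%nat.
Proof. intros Ha HD s. induction s; intros Hs.
  - rewrite Nat.add_0_r, Nat.mod_small; auto.
  - rewrite (Hcls_cyc (nth s w 0%nat)); try (apply HD; lia). 2: apply adm_step with x; auto.
    rewrite IHs by lia. rewrite Nat.Div0.add_mod_idemp_l. f_equal. lia. Qed.

Lemma mod_cancel a b k : (a < m)%nat -> (b < m)%nat -> ((a + k) mod m = (b + k) mod m)%nat -> a = b.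
Proof. intros Ha Hb H.
  assert (H2 : ((a + k + (m * k - k)) mod m = (b + k + (m * k - k)) mod m)%nat).
  { rewrite (Nat.Div0.add_mod (a + k)), (Nat.Div0.add_mod (b+k)), H. reflexivity. }
  assert (m * k >= k)%nat by nia.
  replace (a + k + (m * k - k))%nat with (a + k * m)%nat in H2 by nia.
  replace (b + k + (m * k - k))%nat with (b + k * m)%nat in H2 by nia.
  rewrite !Nat.Div0.mod_add, !Nat.mod_small in H2; auto. Qed.

Definition goodw (j : nat) (w : list nat) : Prop :=
  forall s, (s < length w)%nat -> Delta (nth s w 0%nat) = true /\ cls (nth s w 0%nat) = ((j + s) mod m)%nat.

Lemma CP_iff P n w : CP P n w = true <-> forall s, (s < n)%nat -> P s (nth s w 0%nat) = true.
Proof. unfold CP. apply forallb_true_iff_seq. Qed.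

Lemma comm_cond j k w x : (j < m)%nat -> length w = (k + m)%nat -> adm A w x = true ->
  CP (Qc k (PD Delta) (Pm Delta cls m ((j + k) mod m))) (k + m) w =
  CP (Qc m (Pm Delta cls m j) (PD Delta)) (k + m) w.
Proof. intros Hj Hlen Ha. apply Bool.eq_iff_eq_true. rewrite !CP_iff.
  assert (G : forall P, (forall s, (s < k + m)%nat -> P s (nth s w 0%nat) = true) ->
    (forall s, (s < k + m)%nat -> Delta (nth s w 0%nat) = true) -> (cls (nth 0 w 0%nat) = j) ->
    forall s, (s < k + m)%nat -> Delta (nth s w 0%nat) = true /\ cls (nth s w 0%nat) = ((j + s) mod m)%nat).
  { intros P _ HD H0 s Hs. split; auto. rewrite <- H0. apply cls_prop with x; auto.
    - intros; apply HD; lia.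
    - lia. }
  split; intros H.
  - assert (HD : forall s, (s < k + m)%nat -> Delta (nth s w 0%nat) = true).
    { intros s Hs. specialize (H s Hs). unfold Qc, PD, Pm in H. destruct (s <? k); auto.
      apply andb_true_iff in H; tauto. }
    assert (H0 : cls (nth 0 w 0%nat) = j).
    { pose proof (H k ltac:(lia)) as Hk. unfold Qc, Pm in Hk. rewrite Nat.ltb_irrefl in Hk.
      apply andb_true_iff in Hk. destruct Hk as [_ Hk]. apply Nat.eqb_eq in Hk.
      rewrite (cls_prop w x Ha ltac:(intros; apply HD; rewrite <- Hlen; lia) k ltac:(rewrite Hlen; lia)) in Hk.
      rewrite Nat.sub_diag, Nat.add_0_r, Nat.Div0.mod_mod in Hk.
      apply mod_cancel with k; auto. apply Hcls_rng, HD. lia. }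
    intros s Hs. destruct (G _ H HD H0 s Hs) as [G1 G2]. unfold Qc, Pm, PD.
    destruct (s <? m); auto. rewrite G1, G2, Nat.eqb_refl. auto.
  - assert (HD : forall s, (s < k + m)%nat -> Delta (nth s w 0%nat) = true).
    { intros s Hs. specialize (H s Hs). unfold Qc, PD, Pm in H. destruct (s <? m); auto.
      apply andb_true_iff in H; tauto. }
    assert (H0 : cls (nth 0 w 0%nat) = j).
    { pose proof (H 0%nat ltac:(lia)) as Hk. unfold Qc, Pm in Hk.
      destruct (Nat.ltb_spec 0 m); [|lia].
      apply andb_true_iff in Hk. destruct Hk as [_ Hk]. apply Nat.eqb_eq in Hk.
      rewrite Hk, Nat.add_0_r, Nat.mod_small; auto. }
    intros s Hs. destruct (G _ H HD H0 s Hs) as [G1 G2]. unfold Qc, Pm, PD.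
    destruct (Nat.ltb_spec s k); auto. rewrite G1, G2. simpl. apply Nat.eqb_eq.
    rewrite Nat.Div0.add_mod_idemp_l. f_equal. lia. Qed.

End Cls.

Lemma commute l A phi Delta m cls (Hm : (1 <= m)%nat)
  (Hcls_rng : forall i, Delta i = true -> (cls i < m)%nat)
  (Hcls_cyc : forall i i', Delta i = true -> Delta i' = true -> A i i' = true ->
                cls i' = ((cls i + 1) mod m)%nat) j k f :
  (j < m)%nat ->
  Lm l A phi Delta cls m ((j + k) mod m) (opiter (LDelta l A phi Delta) k f) =
  opiter (LDelta l A phi Delta) k (Lm l A phi Delta cls m j f).
Proof. intros Hj. apply functional_extensionality; intros x.
  rewrite opiter_LDelta, !Lm_eq, !Lgen_comp. rewrite (Nat.add_comm m k).
  apply Lgen_cond_ext. intros w Hw Ha. apply In_words in Hw.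
  destruct Hw as [Hw _]. eapply comm_cond; eauto. Qed.

Lemma commute_iter l A phi Delta m cls (Hm : (1 <= m)%nat)
  (Hcls_rng : forall i, Delta i = true -> (cls i < m)%nat)
  (Hcls_cyc : forall i i', Delta i = true -> Delta i' = true -> A i i' = true ->
                cls i' = ((cls i + 1) mod m)%nat) j k n f :
  (j < m)%nat ->
  opiter (Lm l A phi Delta cls m ((j + k) mod m)) n (opiter (LDelta l A phi Delta) k f) =
  opiter (LDelta l A phi Delta) k (opiter (Lm l A phi Delta cls m j) n f).
Proof. intros Hj. induction n; auto.
  change (opiter (Lm l A phi Delta cls m ((j + k) mod m)) (S n) (opiter (LDelta l A phi Delta) k f))
    with (Lm l A phi Delta cls m ((j + k) mod m) (opiter (Lm l A phi Delta cls m ((j + k) mod m)) n (opiter (LDelta l A phi Delta) k f))).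
  rewrite IHn. apply commute; auto. Qed.

Definition contAt l A (f : seqn -> R) (p : seqn) : Prop :=
  forall eps, 0 < eps -> exists N, forall y, InSigmaA l A y -> agree p y N -> Rabs (f p - f y) < eps.

Lemma agree_mono x y N N' : agree x y N -> (N' <= N)%nat -> agree x y N'.
Proof. intros H H' i Hi. apply H. lia. Qed.

Lemma contAt_const l A c p : contAt l A (fun _ => c) p.
Proof. intros eps He. exists 0%nat. intros. rewrite Rminus_diag, Rabs_R0. auto. Qed.

Lemma contAt_plus l A f g p : contAt l A f p -> contAt l A g p -> contAt l A (fun x => f x + g x) p.
Proof. intros Hf Hg eps He. destruct (Hf (eps/2)) as [N1 H1]; [lra|]. destruct (Hg (eps/2)) as [N2 H2]; [lra|].
  exists (max N1 N2). intros y Hy Ha.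
  specialize (H1 y Hy (agree_mono _ _ _ _ Ha (Nat.le_max_l _ _))).
  specialize (H2 y Hy (agree_mono _ _ _ _ Ha (Nat.le_max_r _ _))).
  replace (f p + g p - (f y + g y)) with ((f p - f y) + (g p - g y)) by ring.
  eapply Rle_lt_trans; [apply Rabs_triang|]. lra. Qed.

Lemma contAt_mult l A f g p : contAt l A f p -> contAt l A g p -> contAt l A (fun x => f x * g x) p.
Proof. intros Hf Hg eps He.
  set (a := Rabs (f p) + 1). set (b := Rabs (g p) + 1).
  assert (Ha : 0 < a) by (unfold a; pose proof (Rabs_pos (f p)); lra).
  assert (Hb : 0 < b) by (unfold b; pose proof (Rabs_pos (g p)); lra).
  set (d := Rmin 1 (eps / (2 * (a + b)))).
  assert (Hd : 0 < d). { unfold d. apply Rmin_glb_lt; [lra|]. apply Rdiv_lt_0_compat; lra. }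
  destruct (Hf d Hd) as [N1 H1]. destruct (Hg d Hd) as [N2 H2].
  exists (max N1 N2). intros y Hy Hag.
  specialize (H1 y Hy (agree_mono _ _ _ _ Hag (Nat.le_max_l _ _))).
  specialize (H2 y Hy (agree_mono _ _ _ _ Hag (Nat.le_max_r _ _))).
  assert (Hd1 : d <= 1) by apply Rmin_l.
  assert (Hd2 : d <= eps / (2 * (a + b))) by apply Rmin_r.
  assert (Hgy : Rabs (g y) <= b).
  { unfold b. replace (g y) with (g p - (g p - g y)) by ring.
    eapply Rle_trans; [apply Rabs_triang|]. rewrite Rabs_Ropp. lra. }
  replace (f p * g p - f y * g y) with (f p * (g p - g y) + (f p - f y) * g y) by ring.
  eapply Rle_lt_trans; [apply Rabs_triang|]. rewrite !Rabs_mult.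
  assert (Rabs (f p) * Rabs (g p - g y) <= a * d).
  { apply Rmult_le_compat; try apply Rabs_pos; unfold a; lra. }
  assert (Rabs (f p - f y) * Rabs (g y) <= d * b).
  { apply Rmult_le_compat; try apply Rabs_pos; lra. }
  assert (a * d + d * b <= (a + b) * (eps / (2 * (a + b)))).
  { replace (a * d + d * b) with ((a+b) * d) by ring. apply Rmult_le_compat_l; lra. }
  assert ((a + b) * (eps / (2 * (a + b))) = eps / 2) by (field; lra). lra. Qed.

Lemma contAt_compR l A (g : R -> R) f p : continuity_pt g (f p) -> contAt l A f p -> contAt l A (fun x => g (f x)) p.
Proof. intros Hg Hf eps He. destruct (Hg eps He) as [alp [Halp H]].
  destruct (Hf alp Halp) as [N HN]. exists N. intros y Hy Ha.
  destruct (Req_dec (f y) (f p)) as [E|E].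
  - rewrite E, Rminus_diag, Rabs_R0; auto.
  - specialize (H (f y)). simpl in H. unfold Rdist in H. rewrite Rabs_minus_sym. apply H.
    split. + split; [exact I|auto]. + rewrite Rabs_minus_sym. apply HN; auto. Qed.

Lemma contAt_lsum l A {T} (F : T -> seqn -> R) L p : (forall t, In t L -> contAt l A (F t) p) ->
  contAt l A (fun x => lsum (fun t => F t x) L) p.
Proof. induction L; intros H; simpl.
  - apply contAt_const.
  - apply contAt_plus. + apply H; simpl; auto. + apply IHL; intros; apply H; simpl; auto. Qed.

Lemma holder_cont l A phi : holder l A phi -> forall p, InSigmaA l A p -> contAt l A phi p.
Proof. intros [C [th [[H0 H1] H]]] p Hp eps He.
  assert (HC : exists C', 0 < C' /\ C <= C') by (exists (Rabs C + 1); split; [pose proof (Rabs_pos C)|unfold Rabs; destruct (Rcase_abs C)]; lra).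
  destruct HC as [C' [HC1 HC2]].
  destruct (pow_lt_1_zero th ltac:(rewrite Rabs_pos_eq; lra) (eps / C') ltac:(apply Rdiv_lt_0_compat; lra)) as [N HN].
  exists N. intros y Hy Ha. eapply Rle_lt_trans; [apply (H p y N); auto|].
  specialize (HN N (le_n _)). rewrite Rabs_pos_eq in HN by (apply pow_le; lra).
  assert (C * th ^ N <= C' * th ^ N) by (apply Rmult_le_compat_r; [apply pow_le; lra|lra]).
  assert (C' * th ^ N < C' * (eps / C')) by (apply Rmult_lt_compat_l; lra).
  replace (C' * (eps / C')) with eps in * by (field; lra). lra. Qed.

Lemma iter_shift_Sigma l A i z : InSigmaA l A z -> InSigmaA l A (Nat.iter i shift z).
Proof. intros Hz t. rewrite !iter_shift. replace (i + S t)%nat with (S (i + t)) by lia. apply Hz. Qed.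

Lemma contAt_shift l A f i p : InSigmaA l A p -> contAt l A f (Nat.iter i shift p) ->
  contAt l A (fun z => f (Nat.iter i shift z)) p.
Proof. intros Hp Hf eps He. destruct (Hf eps He) as [N HN]. exists (i + N)%nat. intros y Hy Ha.
  apply HN. - apply iter_shift_Sigma; auto.
  - intros t Ht. rewrite !iter_shift. apply Ha. lia. Qed.

Lemma contAt_birk l A phi n p : holder l A phi -> InSigmaA l A p ->
  contAt l A (fun z => birkhoff phi n z) p.
Proof. intros Hh Hp. unfold birkhoff. apply contAt_lsum with (F := fun i z => phi (Nat.iter i shift z)).
  intros i _. apply contAt_shift; auto. apply holder_cont; auto. apply iter_shift_Sigma; auto. Qed.

Lemma contAt_expbirk l A phi n f p : holder l A phi -> InSigmaA l A p -> contAt l A f p ->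
  contAt l A (fun z => exp (birkhoff phi n z) * f z) p.
Proof. intros Hh Hp Hf. apply contAt_mult; auto.
  apply contAt_compR with (f := fun z => birkhoff phi n z).
  - apply derivable_continuous_pt, derivable_pt_exp.
  - apply contAt_birk; auto. Qed.

Lemma adm_agree A w x y : agree x y 1 -> adm A w x = adm A w y.
Proof. intros H. unfold adm. apply forallb_ext_in. intros i Hi. apply in_seq in Hi.
  assert (E : forall t, (t <= length w)%nat -> prep w x t = prep w y t).
  { intros t Ht. destruct (Nat.lt_ge_cases t (length w)).
    - rewrite !prep_nth; auto.
    - replace t with (length w + 0)%nat by lia. rewrite !prep_tail. apply H. lia. }
  rewrite !E by lia. reflexivity. Qed.

Lemma agree_prep w x y N : agree x y N -> agree (prep w x) (prep w y) (length w + N).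
Proof. intros H t Ht. destruct (Nat.lt_ge_cases t (length w)).
  - rewrite !prep_nth; auto.
  - replace t with (length w + (t - length w))%nat by lia. rewrite !prep_tail. apply H. lia. Qed.

Lemma contAt_term l A n w (b : bool) G p : In w (words l n) -> InSigmaA l A p ->
  (forall q, InSigmaA l A q -> contAt l A G q) ->
  contAt l A (fun x => if adm A w x && b then G (prep w x) else 0) p.
Proof. intros Hw Hp HG eps He.
  destruct (adm A w p && b) eqn:E.
  - assert (Hpp : InSigmaA l A (prep w p)).
    { apply andb_true_iff in E. eapply prep_Sigma; eauto; tauto. }
    destruct (HG _ Hpp eps He) as [N HN]. exists (S N). intros y Hy Ha.
    rewrite <- (adm_agree A w p y) by (eapply agree_mono; eauto; lia). rewrite E.
    apply HN. + apply andb_true_iff in E. eapply prep_Sigma; eauto.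
      rewrite <- (adm_agree A w p y) by (eapply agree_mono; eauto; lia). tauto.
    + eapply agree_mono; [apply agree_prep; eauto|lia].
  - exists 1%nat. intros y Hy Ha. rewrite <- (adm_agree A w p y) by auto. rewrite E.
    rewrite Rminus_diag, Rabs_R0; auto. Qed.

Lemma Lgen_cont l A phi n C f : holder l A phi -> cont_on l A f -> cont_on l A (Lgen l A phi n C f).
Proof. intros Hh Hf p eps Hp He. unfold Lgen.
  assert (H : contAt l A (fun x => lsum (fun w => if adm A w x && C w
        then exp (birkhoff phi n (prep w x)) * f (prep w x) else 0) (words l n)) p).
  { apply contAt_lsum with (F := fun w x => if adm A w x && C w
        then exp (birkhoff phi n (prep w x)) * f (prep w x) else 0).
    intros w Hw. apply contAt_term with (n := n) (G := fun z => exp (birkhoff phi n z) * f z); auto.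
    intros q Hq. apply contAt_expbirk; auto. intros e He'. apply Hf; auto. }
  apply H; auto. Qed.

Lemma opiter_cont l A Op k f : (forall g, cont_on l A g -> cont_on l A (Op g)) -> cont_on l A f ->
  cont_on l A (opiter Op k f).
Proof. intros H Hf. induction k; simpl; auto. Qed.

Lemma cont_one l A : cont_on l A one.
Proof. intros x eps Hx He. exists 0%nat. intros. unfold one. rewrite Rminus_diag, Rabs_R0; auto. Qed.

Lemma cont_on_iff l A f : cont_on l A f <-> forall p, InSigmaA l A p -> contAt l A f p.
Proof. split. - intros H p Hp eps He. apply H; auto. - intros H p eps Hp He. apply H; auto. Qed.

Lemma cont_scal l A c f : cont_on l A f -> cont_on l A (fun x => c * f x).
Proof. rewrite !cont_on_iff. intros Hf p Hp. apply contAt_mult; auto. apply contAt_const. Qed.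

Lemma cont_lin l A f g c : cont_on l A f -> cont_on l A g -> cont_on l A (fun x => f x + c * g x).
Proof. intros Hf Hg. pose proof (cont_scal l A c g Hg) as Hs. rewrite cont_on_iff in *.
  intros p Hp. apply contAt_plus; auto. Qed.
Lemma unif_lim_cont l A (fn : nat -> seqn -> R) f :
  (forall n, cont_on l A (fn n)) ->
  (forall eps, 0 < eps -> exists n, forall x, InSigmaA l A x -> Rabs (fn n x - f x) < eps) ->
  cont_on l A f.
Proof. intros Hc Hu p eps Hp He. destruct (Hu (eps/3)) as [n Hn]; [lra|].
  destruct (Hc n p (eps/3) Hp ltac:(lra)) as [N HN]. exists N. intros y Hy Ha.
  specialize (HN y Hy Ha). pose proof (Hn p Hp). pose proof (Hn y Hy).
  replace (f p - f y) with (-(fn n p - f p) + (fn n p - fn n y) + (fn n y - f y)) by ring.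
  eapply Rle_lt_trans; [apply Rabs_triang|]. eapply Rle_lt_trans; [apply Rplus_le_compat_r; apply Rabs_triang|].
  rewrite Rabs_Ropp. lra. Qed.

Lemma fin_bound (K : nat) (P : nat -> nat -> Prop) :
  (forall a B B', (B <= B')%nat -> P a B -> P a B') ->
  (forall a, (a < K)%nat -> exists B, P a B) -> exists B, forall a, (a < K)%nat -> P a B.
Proof. intros Hmono H. induction K.
  - exists 0%nat. intros; lia.
  - destruct IHK as [B1 HB1]. { intros; apply H; lia. }
    destruct (H K ltac:(lia)) as [B2 HB2]. exists (max B1 B2). intros a Ha.
    destruct (Nat.eq_dec a K) as [->|].
    + eapply Hmono; [|eauto]. lia.
    + eapply Hmono; [|apply HB1; lia]. lia. Qed.

Section Unif.
Variables (l : nat) (A : nat -> nat -> bool) (f : seqn -> R).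
Hypothesis Hf : cont_on l A f.
Variable eps : R.
Hypothesis He : 0 < eps.
Variables (PP QQ : nat -> seqn).
Hypothesis HP : forall N, InSigmaA l A (PP N).
Hypothesis HQ : forall N, InSigmaA l A (QQ N).
Hypothesis Hag : forall N, agree (PP N) (QQ N) N.
Hypothesis Hbad : forall N, eps <= Rabs (f (PP N) - f (QQ N)).

Definition ext_by (s : list nat) (M : nat) : Prop := forall t, (t < length s)%nat -> PP M t = nth t s 0%nat.
Definition Inf (s : list nat) : Prop := forall K, exists M, (K <= M)%nat /\ ext_by s M.

Lemma Inf_nil : Inf [].
Proof. intros K. exists K. split; auto. intros t Ht. simpl in Ht. lia. Qed.

Lemma Inf_step s : Inf s -> exists a, (a < l)%nat /\ Inf (s ++ [a]).
Proof. intros H. apply NNPP. intros Hn.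
  assert (Hall : forall a, (a < l)%nat -> exists K, forall M, (K <= M)%nat -> ~ ext_by (s ++ [a]) M).
  { intros a Ha. apply NNPP. intros Hc. apply Hn. exists a. split; auto. intros K.
    apply NNPP. intros Hc2. apply Hc. exists K. intros M HM HE. apply Hc2. exists M; auto. }
  destruct (fin_bound l (fun a K => forall M, (K <= M)%nat -> ~ ext_by (s ++ [a]) M)) as [K HK].
  { intros a B B' HB HP' M HM. apply HP'. lia. }
  { auto. }
  destruct (H K) as [M [HM HE]].
  set (a := PP M (length s)). assert (Ha : (a < l)%nat) by (apply HP).
  apply (HK a Ha M HM). intros t Ht. rewrite length_app in Ht. simpl in Ht.
  destruct (Nat.lt_ge_cases t (length s)).
  - rewrite app_nth1 by auto. apply HE; auto.
  - replace t with (length s) by lia. rewrite app_nth2 by lia. rewrite Nat.sub_diag. reflexivity. Qed.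

Definition ext (s : list nat) : nat := epsilon (inhabits 0%nat) (fun a => (a < l)%nat /\ Inf (s ++ [a])).

Fixpoint pre (n : nat) : list nat := match n with O => [] | S n' => pre n' ++ [ext (pre n')] end.

Lemma pre_Inf n : Inf (pre n).
Proof. induction n; simpl. - apply Inf_nil.
  - destruct (Inf_step _ IHn) as [a Ha]. unfold ext. apply (epsilon_spec (inhabits 0%nat) (fun a => (a < l)%nat /\ Inf (pre n ++ [a]))). eauto. Qed.

Lemma pre_lt n : (ext (pre n) < l)%nat.
Proof. destruct (Inf_step _ (pre_Inf n)) as [a Ha]. unfold ext.
  apply (epsilon_spec (inhabits 0%nat) (fun a => (a < l)%nat /\ Inf (pre n ++ [a]))). eauto. Qed.

Lemma pre_len n : length (pre n) = n.
Proof. induction n; simpl; auto. rewrite length_app; simpl; lia. Qed.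

Lemma pre_nth t n : (t < n)%nat -> nth t (pre n) 0%nat = ext (pre t).
Proof. induction n; intros H; [lia|]. simpl. destruct (Nat.eq_dec t n) as [->|].
  - rewrite app_nth2 by (rewrite pre_len; lia). rewrite pre_len, Nat.sub_diag. reflexivity.
  - rewrite app_nth1 by (rewrite pre_len; lia). apply IHn. lia. Qed.

Definition pstar : seqn := fun t => ext (pre t).

Lemma pstar_ext n M : ext_by (pre n) M -> agree pstar (PP M) n.
Proof. intros H t Ht. rewrite (H t) by (rewrite pre_len; auto). rewrite pre_nth; auto. Qed.

Lemma pstar_Sigma : InSigmaA l A pstar.
Proof. intros t. split. - apply pre_lt.
  - destruct (pre_Inf (S (S t)) 0%nat) as [M [_ HM]]. apply pstar_ext in HM.
    rewrite (HM t), (HM (S t)) by lia. apply HP. Qed.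

Lemma unif_contra : False.
Proof. destruct (Hf pstar (eps/2) pstar_Sigma ltac:(lra)) as [N HN].
  destruct (pre_Inf N N) as [M [HM HE]]. apply pstar_ext in HE.
  assert (H1 := HN (PP M) (HP M) HE).
  assert (H2 : agree pstar (QQ M) N). { intros t Ht. rewrite HE by auto. apply Hag. lia. }
  specialize (HN (QQ M) (HQ M) H2). specialize (Hbad M).
  replace (f (PP M) - f (QQ M)) with (-(f pstar - f (PP M)) + (f pstar - f (QQ M))) in Hbad by ring.
  pose proof (Rabs_triang (-(f pstar - f (PP M))) (f pstar - f (QQ M))). rewrite Rabs_Ropp in H. lra. Qed.
End Unif.

Lemma unif_cont l A f : cont_on l A f -> forall eps, 0 < eps -> exists N, forall p q,
  InSigmaA l A p -> InSigmaA l A q -> agree p q N -> Rabs (f p - f q) < eps.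
Proof. intros Hf eps He. apply NNPP. intros Hn.
  assert (H : forall N, exists pq : seqn * seqn, InSigmaA l A (fst pq) /\ InSigmaA l A (snd pq) /\
     agree (fst pq) (snd pq) N /\ eps <= Rabs (f (fst pq) - f (snd pq))).
  { intros N. apply NNPP. intros Hc. apply Hn. exists N. intros p q Hp Hq Ha.
    apply Rnot_le_lt. intros Hle. apply Hc. exists (p, q). simpl. auto. }
  set (pq := fun N => epsilon (inhabits (((fun _ => 0%nat) : seqn), ((fun _ => 0%nat) : seqn))) (fun pq => InSigmaA l A (fst pq) /\ InSigmaA l A (snd pq) /\
     agree (fst pq) (snd pq) N /\ eps <= Rabs (f (fst pq) - f (snd pq)))).
  assert (Hpq : forall N, InSigmaA l A (fst (pq N)) /\ InSigmaA l A (snd (pq N)) /\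
     agree (fst (pq N)) (snd (pq N)) N /\ eps <= Rabs (f (fst (pq N)) - f (snd (pq N)))).
  { intros N. unfold pq. apply (epsilon_spec (inhabits (((fun _ => 0%nat) : seqn), ((fun _ => 0%nat) : seqn)))). apply H. }
  apply (unif_contra l A f Hf eps He (fun N => fst (pq N)) (fun N => snd (pq N)));
    intros N; apply Hpq. Qed.

Lemma Rabs_le_between a b : Rabs a <= b -> -b <= a <= b.
Proof. unfold Rabs. destruct (Rcase_abs a); intros; lra. Qed.

Section Nu.
Variables (l : nat) (A : nat -> nat -> bool) (nu : (seqn -> R) -> R).
Hypothesis Hnu : prob_functional l A nu.

Lemma nu_diff f g : cont_on l A f -> cont_on l A g ->
  nu f - nu g = nu (fun x => f x + (-1) * g x).
Proof. intros Hf Hg. destruct Hnu as [H1 [H2 _]].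
  rewrite H1; auto. 2: apply cont_scal; auto. rewrite H2; auto. ring. Qed.

Lemma nu_le f g : cont_on l A f -> cont_on l A g -> (forall x, InSigmaA l A x -> f x <= g x) -> nu f <= nu g.
Proof. intros Hf Hg H. assert (0 <= nu g - nu f); [|lra]. rewrite nu_diff; auto.
  destruct Hnu as [_ [_ [H3 _]]]. apply H3. - apply cont_lin; auto.
  - intros x Hx. specialize (H x Hx). lra. Qed.

Lemma nu_ext f g : cont_on l A f -> cont_on l A g -> (forall x, InSigmaA l A x -> f x = g x) -> nu f = nu g.
Proof. intros Hf Hg H. apply Rle_antisym; apply nu_le; auto; intros x Hx; rewrite H; auto; lra. Qed.

Lemma nu_const c : nu (fun _ => c) = c.
Proof. destruct Hnu as [_ [H2 [_ H4]]]. transitivity (nu (fun x => c * one x)).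
  - f_equal. apply functional_extensionality; intros; unfold one; ring.
  - rewrite H2, H4. ring. apply cont_one. Qed.

Lemma nu_close f g e : cont_on l A f -> cont_on l A g ->
  (forall x, InSigmaA l A x -> Rabs (f x - g x) <= e) -> Rabs (nu f - nu g) <= e.
Proof. intros Hf Hg H. assert (Hc : forall c, cont_on l A (fun _ => c)).
  { intros c x eps Hx He. exists 0%nat. intros. rewrite Rminus_diag, Rabs_R0; auto. }
  apply Rabs_le. split.
  - assert (nu (fun x => g x + (-1) * (fun _ => e) x) <= nu f).
    { apply nu_le; auto. apply cont_lin; auto. intros x Hx. specialize (H x Hx). apply Rabs_le_between in H.
      simpl. lra. }
    rewrite <- nu_diff in H0; auto. rewrite nu_const in H0. lra.
  - assert (nu f <= nu (fun x => g x + (-1) * (fun _ => -e) x)).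
    { apply nu_le; auto. apply cont_lin; auto. intros x Hx. specialize (H x Hx). apply Rabs_le_between in H.
      simpl. lra. }
    rewrite <- nu_diff in H0; auto. rewrite nu_const in H0. lra. Qed.

Lemma nu_scal c f : cont_on l A f -> nu (fun x => c * f x) = c * nu f.
Proof. intros Hf. destruct Hnu as [_ [H2 _]]. apply H2; auto. Qed.
End Nu.

Lemma exp_le a b : a <= b -> exp a <= exp b.
Proof. intros H. destruct (Rle_lt_or_eq_dec _ _ H) as [H'|H']; [left; apply exp_increasing; auto|rewrite H'; lra]. Qed.

Lemma exp_pow a n : exp a ^ n = exp (INR n * a).
Proof. induction n; simpl. - rewrite Rmult_0_l, exp_0; auto.
  - rewrite IHn, <- exp_plus. f_equal. destruct n; simpl; ring. Qed.

Section Points.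
Variables (l : nat) (A : nat -> nat -> bool) (Delta : nat -> bool) (m : nat) (cls : nat -> nat).
Hypothesis Hm : (1 <= m)%nat.
Hypothesis HDsub : forall i, Delta i = true -> (i < l)%nat.
Hypothesis HDirr : irreducible l A Delta.
Hypothesis Hcls_rng : forall i, Delta i = true -> (cls i < m)%nat.
Hypothesis Hcls_cyc : forall i i', Delta i = true -> Delta i' = true -> A i i' = true ->
                cls i' = ((cls i + 1) mod m)%nat.

Lemma cls_point y : InSigmaA l A y -> (forall t, Delta (y t) = true) ->
  forall t, cls (y t) = ((cls (y 0%nat) + t) mod m)%nat.
Proof. intros Hy HD t. induction t.
  - rewrite Nat.add_0_r, Nat.mod_small; auto.
  - rewrite (Hcls_cyc (y t)); auto. 2: apply Hy. rewrite IHt, Nat.Div0.add_mod_idemp_l. f_equal; lia. Qed.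

Lemma succ_ex a : Delta a = true -> exists b, Delta b = true /\ A a b = true /\ (b < l)%nat.
Proof. intros Ha. destruct (HDirr a a Ha Ha) as [n [Hn [w [H0 [H1 [H2 H3]]]]]].
  exists (w 1%nat). destruct (H2 1%nat Hn). split; auto. split; auto. rewrite <- H0. apply H3. lia. Qed.

Definition sf (a : nat) : nat := epsilon (inhabits 0%nat) (fun b => Delta b = true /\ A a b = true /\ (b < l)%nat).

Lemma sf_spec a : Delta a = true -> Delta (sf a) = true /\ A a (sf a) = true /\ (sf a < l)%nat.
Proof. intros Ha. unfold sf. apply (epsilon_spec (inhabits 0%nat) (fun b => Delta b = true /\ A a b = true /\ (b < l)%nat)).
  apply succ_ex; auto. Qed.

Definition spath (a : nat) : seqn := fun t => Nat.iter (S t) sf a.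

Lemma spath_prop a : Delta a = true -> InSigmaA l A (spath a) /\ (forall t, Delta (spath a t) = true) /\
  A a (spath a 0%nat) = true.
Proof. intros Ha.
  assert (HD : forall t, Delta (spath a t) = true).
  { induction t; unfold spath in *; simpl. - apply sf_spec; auto. - apply sf_spec; auto. }
  split; [|split; auto].
  - intros t. split.
    + destruct t; unfold spath; simpl; apply sf_spec; auto. apply HD.
    + unfold spath. change (Nat.iter (S (S t)) sf a) with (sf (Nat.iter (S t) sf a)). apply sf_spec. apply HD.
  - unfold spath. simpl. apply sf_spec; auto. Qed.

Lemma adm_change w x x' : adm A w x = true -> (1 <= length w)%nat ->
  A (nth (length w - 1) w 0%nat) (x' 0%nat) = true -> adm A w x' = true.
Proof. intros Ha Hl Hlast. unfold adm in *. rewrite forallb_forall in *. intros s Hs.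
  apply in_seq in Hs. destruct (Nat.lt_ge_cases (S s) (length w)).
  - rewrite !prep_nth by lia. specialize (Ha s ltac:(apply in_seq; lia)). rewrite !prep_nth in Ha by lia. auto.
  - rewrite prep_nth by lia. replace (S s) with (length w + 0)%nat by lia. rewrite prep_tail.
    replace s with (length w - 1)%nat by lia. auto. Qed.

Lemma close_Omega i n w x : (1 <= n)%nat -> In w (words l n) -> adm A w x = true ->
  CP (Pm Delta cls m i) n w = true -> (i < m)%nat ->
  exists z, InOmega l A Delta cls i z /\ agree (prep w x) z n.
Proof. intros Hn Hw Ha HC Hi. apply In_words in Hw. destruct Hw as [Hlen Hlt].
  rewrite CP_iff in HC. unfold Pm in HC.
  assert (HDw : forall s, (s < n)%nat -> Delta (nth s w 0%nat) = true /\ cls (nth s w 0%nat) = ((i + s) mod m)%nat).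
  { intros s Hs. specialize (HC s Hs). apply andb_true_iff in HC. destruct HC as [H1 H2]. apply Nat.eqb_eq in H2. auto. }
  set (a := nth (n - 1) w 0%nat). assert (HaD : Delta a = true) by (apply HDw; lia).
  destruct (spath_prop a HaD) as [Hs1 [Hs2 Hs3]].
  exists (prep w (spath a)). split.
  - assert (Hadm : adm A w (spath a) = true) by (apply adm_change with x; auto; rewrite Hlen; auto; lia).
    split; [split|].
    + eapply prep_Sigma; eauto. apply In_words. auto.
    + intros t. destruct (Nat.lt_ge_cases t (length w)).
      * rewrite prep_nth; auto. apply HDw. lia.
      * replace t with (length w + (t - length w))%nat by lia. rewrite prep_tail. auto.
    + rewrite prep_nth by lia. rewrite (proj2 (HDw 0%nat ltac:(lia))). rewrite Nat.add_0_r, Nat.mod_small; auto.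
  - intros t Ht. rewrite !prep_nth by lia. auto. Qed.

Lemma Omega_prep i n w x : (1 <= n)%nat -> In w (words l n) -> adm A w x = true ->
  CP (Pm Delta cls m i) n w = true -> (i < m)%nat -> InSigmaD l A Delta x ->
  InOmega l A Delta cls i (prep w x).
Proof. intros Hn Hw Ha HC Hi [Hx1 Hx2]. pose proof Hw as Hw'. apply In_words in Hw. destruct Hw as [Hlen Hlt].
  rewrite CP_iff in HC. unfold Pm in HC.
  assert (HDw : forall s, (s < n)%nat -> Delta (nth s w 0%nat) = true /\ cls (nth s w 0%nat) = ((i + s) mod m)%nat).
  { intros s Hs. specialize (HC s Hs). apply andb_true_iff in HC. destruct HC as [H1 H2]. apply Nat.eqb_eq in H2. auto. }
  split; [split|].
  - eapply prep_Sigma; eauto.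
  - intros t. destruct (Nat.lt_ge_cases t (length w)).
    + rewrite prep_nth; auto. apply HDw. lia.
    + replace t with (length w + (t - length w))%nat by lia. rewrite prep_tail. auto.
  - rewrite prep_nth by lia. rewrite (proj2 (HDw 0%nat ltac:(lia))). rewrite Nat.add_0_r, Nat.mod_small; auto. Qed.
End Points.

Section W.
Variables (l : nat) (A : nat -> nat -> bool) (Delta : nat -> bool) (m : nat) (cls : nat -> nat).
Hypothesis Hm : (1 <= m)%nat.
Hypothesis HDsub : forall i, Delta i = true -> (i < l)%nat.
Hypothesis HDirr : irreducible l A Delta.
Hypothesis Hcls_rng : forall i, Delta i = true -> (cls i < m)%nat.
Hypothesis Hcls_cyc : forall i i', Delta i = true -> Delta i' = true -> A i i' = true ->
                cls i' = ((cls i + 1) mod m)%nat.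

Lemma path_bound : exists B0, forall a b, Delta a = true -> Delta b = true ->
  exists L, (1 <= L <= B0)%nat /\ path_in l A Delta a b L.
Proof.
  assert (Hin : forall a, (a < l)%nat -> exists B, forall b, (b < l)%nat -> Delta a = true -> Delta b = true ->
     exists L, (1 <= L <= B)%nat /\ path_in l A Delta a b L).
  { intros a Ha. apply (fin_bound l (fun b B => Delta a = true -> Delta b = true ->
       exists L, (1 <= L <= B)%nat /\ path_in l A Delta a b L)).
    + intros b B B' HBB H Ha' Hb'. destruct (H Ha' Hb') as [L [HL HP]]. exists L. split; auto. lia.
    + intros b Hb. destruct (Delta a) eqn:Ea; [|exists 0%nat; intros; discriminate].
      destruct (Delta b) eqn:Eb; [|exists 0%nat; intros; discriminate].
      destruct (HDirr a b Ea Eb) as [L [HL HP]]. exists L. intros _ _. exists L. split; [lia|auto]. }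
  destruct (fin_bound l (fun a B => forall b, (b < l)%nat -> Delta a = true -> Delta b = true ->
     exists L, (1 <= L <= B)%nat /\ path_in l A Delta a b L)) as [B HB].
  - intros a B B' HBB H b Hb Ha Hb'. destruct (H b Hb Ha Hb') as [L [HL HP]]. exists L. split; auto. lia.
  - exact Hin.
  - exists B. intros a b Ha Hb. apply HB; auto. Qed.

Lemma witness i z x0 N L (w : seqn) : (i < m)%nat ->
  InOmega l A Delta cls i z -> InOmega l A Delta cls i x0 -> (1 <= N)%nat -> (1 <= L)%nat ->
  w 0%nat = z (N - 1)%nat -> w L = x0 0%nat ->
  (forall t, (t <= L)%nat -> (w t < l)%nat /\ Delta (w t) = true) ->
  (forall t, (t < L)%nat -> A (w t) (w (S t)) = true) ->
  exists v n, (1 <= n)%nat /\ (n * m = N - 1 + L)%nat /\ In v (words l (n * m)) /\ adm A v x0 = true /\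
    CP (Pm Delta cls m i) (n * m) v = true /\ agree z (prep v x0) N.
Proof. intros Hi [[Hz1 Hz2] Hz3] [[Hx1 Hx2] Hx3] HN HL Hw0 HwL Hw1 Hw2.
  set (y := fun t => if Nat.ltb t (N - 1) then z t else if Nat.ltb t (N - 1 + L) then w (t - (N - 1))%nat
     else x0 (t - (N - 1 + L))%nat).
  assert (Ey : forall t, ((N - 1 <= t <= N - 1 + L)%nat -> y t = w (t - (N - 1))%nat) /\
                       ((t < N - 1)%nat -> y t = z t) /\ ((N - 1 + L <= t)%nat -> y t = x0 (t - (N - 1 + L))%nat)).
  { intros t. unfold y. destruct (Nat.ltb_spec t (N - 1)); destruct (Nat.ltb_spec t (N - 1 + L));
      repeat split; intros; try lia; auto.
    replace (t - (N - 1 + L))%nat with 0%nat by lia. replace (t - (N - 1))%nat with L by lia. auto. }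
  assert (HyS : InSigmaA l A y).
  { intros t. split.
    - destruct (Nat.lt_ge_cases t (N - 1)); [rewrite (proj1 (proj2 (Ey t))) by auto; apply Hz1|].
      destruct (Nat.le_gt_cases t (N - 1 + L)); [rewrite (proj1 (Ey t)) by lia; apply Hw1; lia|].
      rewrite (proj2 (proj2 (Ey t))) by lia. apply Hx1.
    - destruct (Nat.lt_ge_cases (S t) (N - 1)).
      { rewrite !(proj1 (proj2 (Ey _))) by lia. apply Hz1. }
      destruct (Nat.lt_ge_cases t (N - 1)).
      { rewrite (proj1 (proj2 (Ey t))) by lia. rewrite (proj1 (Ey (S t))) by lia.
        replace (S t - (N - 1))%nat with 0%nat by lia. rewrite Hw0. replace (N - 1)%nat with (S t) by lia. apply Hz1. }
      destruct (Nat.lt_ge_cases t (N - 1 + L)).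
      { rewrite (proj1 (Ey t)) by lia. rewrite (proj1 (Ey (S t))) by lia.
        replace (S t - (N - 1))%nat with (S (t - (N - 1))) by lia. apply Hw2. lia. }
      rewrite !(proj2 (proj2 (Ey _))) by lia. replace (S t - (N - 1 + L))%nat with (S (t - (N - 1 + L))) by lia.
      apply Hx1. }
  assert (HyD : forall t, Delta (y t) = true).
  { intros t. destruct (Nat.lt_ge_cases t (N - 1)); [rewrite (proj1 (proj2 (Ey t))) by auto; apply Hz2|].
    destruct (Nat.le_gt_cases t (N - 1 + L)); [rewrite (proj1 (Ey t)) by lia; apply Hw1; lia|].
    rewrite (proj2 (proj2 (Ey t))) by lia. apply Hx2. }
  assert (Hy0 : y 0%nat = z 0%nat).
  { destruct (Nat.eq_dec N 1). - rewrite (proj1 (Ey 0%nat)) by lia. replace (0 - (N-1))%nat with 0%nat by lia.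
      rewrite Hw0. f_equal; lia. - rewrite (proj1 (proj2 (Ey 0%nat))) by lia. auto. }
  assert (Hcy : forall t, cls (y t) = ((i + t) mod m)%nat).
  { intros t. rewrite (cls_point l A Delta m cls Hm Hcls_rng Hcls_cyc y HyS HyD t). rewrite Hy0, Hz3. auto. }
  set (Q := (N - 1 + L)%nat).
  assert (HQ : (Q mod m = 0)%nat).
  { pose proof (Hcy Q) as H. unfold Q in H. rewrite (proj2 (proj2 (Ey _))) in H by lia.
    rewrite Nat.sub_diag, Hx3 in H. fold Q in H.
    apply (mod_cancel m Hm (Q mod m) 0 i). apply Nat.mod_upper_bound; lia. lia.
    rewrite Nat.Div0.add_mod_idemp_l. rewrite Nat.add_comm, <- H. simpl. rewrite Nat.mod_small; auto. }
  assert (HQn : Q = ((Q / m) * m)%nat). { pose proof (Nat.Div0.div_mod Q m). lia. }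
  set (v := map y (seq 0 Q)).
  assert (Hpv : prep v x0 = y).
  { apply functional_extensionality; intros t. unfold prep. unfold v. rewrite length_map, length_seq.
    destruct (Nat.ltb_spec t Q).
    - rewrite (nth_indep _ _ (y 0%nat)) by (rewrite length_map, length_seq; auto).
      rewrite map_nth, seq_nth by auto. reflexivity.
    - rewrite (proj2 (proj2 (Ey t))) by (unfold Q in *; lia). reflexivity. }
  assert (Hv : In v (words l Q)).
  { apply In_words. split. - unfold v. rewrite length_map, length_seq. auto.
    - intros a Ha. unfold v in Ha. apply in_map_iff in Ha. destruct Ha as [t [<- _]]. apply HyS. }
  exists v, (Q / m)%nat. rewrite <- HQn. split; [|split; [reflexivity|split; [auto|split; [|split]]]].
  - destruct (Nat.eq_dec (Q / m) 0) as [E|E]; [|lia]. rewrite E in HQn. simpl in HQn. unfold Q in HQn. lia.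
  - unfold adm. apply forallb_forall. intros t Ht. rewrite Hpv. apply HyS.
  - apply CP_iff. intros s Hs. assert (E : nth s v 0%nat = y s).
    { rewrite <- Hpv. unfold prep. apply In_words in Hv. destruct Hv as [Hv _]. rewrite Hv.
      destruct (Nat.ltb_spec s Q); [auto|lia]. }
    rewrite E. unfold Pm. rewrite HyD, Hcy, Nat.eqb_refl. reflexivity.
  - intros t Ht. rewrite Hpv. destruct (Nat.lt_ge_cases t (N - 1)).
    + rewrite (proj1 (proj2 (Ey t))); auto.
    + rewrite (proj1 (Ey t)) by lia. replace (t - (N - 1))%nat with 0%nat by lia. rewrite Hw0. f_equal; lia. Qed.
End W.

Lemma lsum_const_seq c s n : lsum (fun _ => c) (seq s n) = INR n * c.
Proof. revert s; induction n; intros s; [simpl; ring|]. rewrite S_INR. cbn [seq lsum]. rewrite IHn. ring. Qed.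

Lemma birk_lower l A phi c n y : (forall z, InSigmaA l A z -> c <= phi z) -> InSigmaA l A y ->
  INR n * c <= birkhoff phi n y.
Proof. intros Hc Hy. unfold birkhoff. rewrite <- lsum_const_seq with (s := 0%nat).
  apply lsum_le_in. intros t _. apply Hc. apply iter_shift_Sigma; auto. Qed.

Lemma phi_lower l A phi z0 : holder l A phi -> InSigmaA l A z0 -> exists c, forall y, InSigmaA l A y -> c <= phi y.
Proof. intros [C [th [Hth H]]] Hz0. exists (phi z0 - C). intros y Hy.
  specialize (H z0 y 0%nat Hz0 Hy ltac:(intros t Ht; lia)). simpl in H. rewrite Rmult_1_r in H.
  apply Rabs_le_between in H. lra. Qed.

Lemma Lgen_abs_restr l A phi n C f e x :
  (forall w, In w (words l n) -> adm A w x && C w = true -> Rabs (f (prep w x)) <= e) ->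
  Rabs (Lgen l A phi n C f x) <= e * Lgen l A phi n C one x.
Proof. intros H. unfold Lgen. rewrite <- lsum_scal. eapply Rle_trans; [apply lsum_abs|]. apply lsum_le_in.
  intros w Hw. destruct (adm A w x && C w) eqn:E; [|rewrite Rabs_R0; lra].
  rewrite Rabs_mult, Rabs_pos_eq by (left; apply exp_pos). unfold one.
  specialize (H w Hw E). pose proof (exp_pos (birkhoff phi n (prep w x))). nra. Qed.

Lemma small_zero a : (forall eps, 0 < eps -> a < eps) -> a <= 0.
Proof. intros H. destruct (Rle_or_lt a 0); auto. specialize (H a H0). lra. Qed.

Section Uniq.
Variables (l : nat) (A : nat -> nat -> bool) (phi : seqn -> R) (Delta : nat -> bool) (m : nat) (cls : nat -> nat) (P : R).
Hypothesis Hphi : holder l A phi.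
Hypothesis Hnorm : forall x, InSigmaA l A x -> Lphi l A phi one x = 1.
Hypothesis Hm : (1 <= m)%nat.
Hypothesis HDsub : forall i, Delta i = true -> (i < l)%nat.
Hypothesis HDirr : irreducible l A Delta.
Hypothesis Hcls_rng : forall i, Delta i = true -> (cls i < m)%nat.
Hypothesis Hcls_cyc : forall i i', Delta i = true -> Delta i' = true -> A i i' = true ->
                cls i' = ((cls i + 1) mod m)%nat.
Variable i : nat.
Hypothesis Hi : (i < m)%nat.
Definition lam := exp (INR m * P).
Let Li := Lm l A phi Delta cls m i.
Variables u h : seqn -> R.
Hypothesis Huc : cont_on l A u.
Hypothesis Hhc : cont_on l A h.
Hypothesis Hup : forall x, InSigmaA l A x -> 0 <= u x.
Hypothesis Hhp : forall x, InSigmaA l A x -> 0 <= h x.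
Hypothesis Hhb : exists H, forall x, InSigmaA l A x -> h x <= H.
Hypothesis Hz0 : exists z0, InOmega l A Delta cls i z0 /\ 0 < h z0.
Hypothesis Hue : forall n x, InSigmaA l A x -> opiter Li n u x = lam ^ n * u x.
Hypothesis Hhe : forall n x, InSigmaA l A x -> opiter Li n h x = lam ^ n * h x.
Hypothesis Hgr : forall x, InSigmaA l A x -> exists B, forall N0, exists n, (N0 <= n)%nat /\ opiter Li n one x <= B * lam ^ n.

Lemma Omega_Sigma j x : InOmega l A Delta cls j x -> InSigmaA l A x.
Proof. intros [[H _] _]; auto. Qed.

Lemma tstar : exists t, (forall x, InOmega l A Delta cls i x -> t * h x <= u x) /\
  (forall eps, 0 < eps -> exists x0, InOmega l A Delta cls i x0 /\ u x0 - t * h x0 < eps).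
Proof.
  destruct Hz0 as [z0 [Hz Hhz]]. destruct Hhb as [H HH].
  set (E := fun t => 0 <= t /\ forall x, InOmega l A Delta cls i x -> t * h x <= u x).
  assert (Hb : bound E).
  { exists (u z0 / h z0). intros t [Ht1 Ht2]. specialize (Ht2 z0 Hz).
    apply Rmult_le_reg_r with (h z0); auto. unfold Rdiv. rewrite Rmult_assoc, Rinv_l by lra. lra. }
  assert (Hne : exists x, E x).
  { exists 0. split; [lra|]. intros x Hx. rewrite Rmult_0_l. apply Hup. eapply Omega_Sigma; eauto. }
  destruct (completeness E Hb Hne) as [t [Hub Hlub]].
  assert (Ht0 : 0 <= t). { destruct Hne as [x0 Hx0]. apply Rle_trans with x0. apply Hx0. apply Hub; auto. }
  exists t. split.
  - intros x Hx. assert (Hsx : InSigmaA l A x) by (eapply Omega_Sigma; eauto).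
    destruct (Rle_lt_or_eq_dec 0 (h x) (Hhp x Hsx)) as [Hpos|Hz'].
    + assert (t <= u x / h x).
      { apply Hlub. intros t' [Ht1' Ht2']. specialize (Ht2' x Hx).
        apply Rmult_le_reg_r with (h x); auto. unfold Rdiv. rewrite Rmult_assoc, Rinv_l by lra. lra. }
      apply Rmult_le_compat_r with (r := h x) in H0; [|lra]. unfold Rdiv in H0.
      rewrite Rmult_assoc, Rinv_l in H0 by lra. lra.
    + rewrite <- Hz', Rmult_0_r. apply Hup; auto.
  - intros eps He. assert (HHpos : 0 < H) by (specialize (HH z0 (Omega_Sigma _ _ Hz)); lra).
    set (d := eps / (H + 1)). assert (Hd : 0 < d) by (apply Rdiv_lt_0_compat; lra).
    assert (Hn : ~ E (t + d)). { intros HE. specialize (Hub _ HE). lra. }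
    unfold E in Hn. apply not_and_or in Hn. destruct Hn as [Hn|Hn]; [lra|].
    apply not_all_ex_not in Hn. destruct Hn as [x Hx]. apply imply_to_and in Hx. destruct Hx as [Hx Hx'].
    apply Rnot_le_lt in Hx'. exists x. split; auto.
    assert (Hsx : InSigmaA l A x) by (eapply Omega_Sigma; eauto).
    pose proof (HH x Hsx). pose proof (Hhp x Hsx).
    assert (d * h x <= d * H) by (apply Rmult_le_compat_l; lra).
    assert (d * H < eps). { unfold d. apply Rlt_le_trans with (eps / (H + 1) * (H + 1)).
      - apply Rmult_lt_compat_l; [auto|lra].
      - right. field. lra. }
    nra. Qed.

Lemma lam_pow n : lam ^ n = exp (INR (n * m) * P).
Proof. unfold lam. rewrite exp_pow, mult_INR. f_equal. ring. Qed.

Lemma uniq : exists t, forall x, InSigmaA l A x -> u x = t * h x.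
Proof.
  destruct tstar as [t [Ht1 Ht2]]. exists t.
  set (g := fun x => u x + (- t) * h x).
  assert (Hgc : cont_on l A g) by (apply cont_lin; auto).
  assert (Hge : forall n x, InSigmaA l A x -> opiter Li n g x = lam ^ n * g x).
  { intros n x Hx. unfold Li in *. rewrite opiter_Lm. unfold g. rewrite Lgen_lin. rewrite <- !opiter_Lm.
    rewrite Hue, Hhe by auto. ring. }
  assert (Hg0 : forall x, InOmega l A Delta cls i x -> 0 <= g x).
  { intros x Hx. specialize (Ht1 x Hx). unfold g. lra. }
  destruct Hz0 as [z0 [Hz0O Hz0h]].
  destruct (phi_lower l A phi z0 Hphi (Omega_Sigma _ _ Hz0O)) as [c Hc].
  destruct (path_bound l A Delta m Hm HDsub HDirr) as [B0 HB0].
  assert (HB : forall z, InOmega l A Delta cls i z -> g z = 0).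
  { intros z Hz. apply Rle_antisym; [|apply Hg0; auto].
    apply small_zero. intros eps He.
    assert (Hzs : InSigmaA l A z) by (eapply Omega_Sigma; eauto).
    destruct (Hgc z (eps/2) Hzs ltac:(lra)) as [N0 HN0].
    set (N := max 1 N0).
    set (K := exp (INR (N + B0) * Rabs (P - c))).
    assert (HK : 0 < K) by apply exp_pos.
    destruct (Ht2 (eps / 2 / K) ltac:(apply Rdiv_lt_0_compat; lra)) as [x0 [Hx0 Hgx0]].
    assert (Hgx0' : g x0 < eps / 2 / K) by (unfold g; lra).
    destruct Hz as [[Hz1 Hz2] Hz3]. destruct Hx0 as [[Hx1 Hx2] Hx3].
    destruct (HB0 (z (N - 1)%nat) (x0 0%nat) (Hz2 _) (Hx2 _)) as [L [HL [w [Hw0 [HwL [Hw1 Hw2]]]]]].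
    destruct (witness l A Delta m cls Hm Hcls_rng Hcls_cyc i z x0 N L w Hi
       ltac:(split; [split|]; auto) ltac:(split; [split|]; auto) ltac:(unfold N; lia) ltac:(lia)
       Hw0 HwL ltac:(intros t0 Ht0; destruct (Hw1 t0 Ht0); split; auto) Hw2)
      as [v [n [Hn1 [HnQ [Hv [Hva [HvC Hag]]]]]]].
    assert (Hx0O : InOmega l A Delta cls i x0) by (split; [split|]; auto).
    set (y := prep v x0).
    assert (HyO : InOmega l A Delta cls i y).
    { apply Omega_prep with (m := m) (n := (n * m)%nat); auto. lia. split; auto. }
    assert (Hys : InSigmaA l A y) by (eapply Omega_Sigma; eauto).
    assert (Hlow : exp (birkhoff phi (n * m) y) * g y <= lam ^ n * g x0).
    { rewrite <- Hge by auto. unfold Li. rewrite opiter_Lm. unfold Lgen.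
      set (T := fun w => if adm A w x0 && CP (Pm Delta cls m i) (n * m) w
                  then exp (birkhoff phi (n * m) (prep w x0)) * g (prep w x0) else 0).
      change (exp (birkhoff phi (n * m) y) * g y <= lsum T (words l (n * m))).
      replace (exp (birkhoff phi (n * m) y) * g y) with (T v) by (unfold T; rewrite Hva, HvC; reflexivity).
      apply lsum_ge_term; auto. intros w1 Hw1'. unfold T. destruct (adm A w1 x0) eqn:E1; simpl; [|lra].
      destruct (CP (Pm Delta cls m i) (n * m) w1) eqn:E2; [|lra].
      apply Rmult_le_pos; [left; apply exp_pos|]. apply Hg0. apply Omega_prep with (m := m) (n := (n * m)%nat); auto.
      lia. split; auto. }
    assert (Hgy0 : 0 <= g y) by (apply Hg0; auto).
    assert (Hbk : INR (n * m) * c <= birkhoff phi (n * m) y) by (apply birk_lower with l A; auto).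
    assert (Hgy : g y <= K * g x0).
    { rewrite lam_pow in Hlow.
      assert (exp (INR (n * m) * c) * g y <= exp (INR (n * m) * P) * g x0).
      { eapply Rle_trans; [|apply Hlow]. apply Rmult_le_compat_r; auto. apply exp_le; auto. }
      assert (g y <= exp (INR (n * m) * (P - c)) * g x0).
      { apply Rmult_le_reg_l with (exp (INR (n * m) * c)); [apply exp_pos|].
        replace (exp (INR (n * m) * c) * (exp (INR (n * m) * (P - c)) * g x0)) with (exp (INR (n * m) * P) * g x0); auto.
        rewrite <- Rmult_assoc, <- exp_plus. f_equal. f_equal. ring. }
      eapply Rle_trans; [apply H0|]. apply Rmult_le_compat_r; [apply Hg0; auto|]. unfold K. apply exp_le.
      assert (INR (n * m) <= INR (N + B0)) by (apply le_INR; unfold N in *; lia).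
      assert (INR (n * m) * (P - c) <= INR (n * m) * Rabs (P - c)).
      { apply Rmult_le_compat_l; [apply pos_INR|apply Rle_abs]. }
      assert (INR (n * m) * Rabs (P - c) <= INR (N + B0) * Rabs (P - c)).
      { apply Rmult_le_compat_r; [apply Rabs_pos|auto]. }
      lra. }
    assert (Hgy' : g y < eps / 2).
    { assert (K * g x0 < K * (eps / 2 / K)) by (apply Rmult_lt_compat_l; auto).
      replace (K * (eps / 2 / K)) with (eps / 2) in H by (field; lra). lra. }
    assert (Hcl : Rabs (g z - g y) < eps / 2).
    { apply HN0; auto. eapply agree_mono; [apply Hag|]. unfold N; lia. }
    apply Rlt_le, Rabs_le_between in Hcl. lra. }
  intros x Hx. assert (Hgx : g x = 0); [|unfold g in Hgx; lra].
  destruct (Hgr x Hx) as [B HBx].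
  assert (Hsm : forall eps, 0 < eps -> Rabs (g x) <= eps * B).
  { intros eps He. destruct (unif_cont l A g Hgc eps He) as [N HN].
    destruct (HBx (max N 1)) as [n [Hn HLn]].
    assert (Hlp : 0 < lam ^ n) by (apply pow_lt; unfold lam; apply exp_pos).
    assert (Habs : Rabs (opiter Li n g x) <= eps * opiter Li n one x).
    { unfold Li. rewrite !opiter_Lm. apply Lgen_abs_restr. intros w Hw Hac.
      apply andb_true_iff in Hac. destruct Hac as [Ha HC].
      destruct (close_Omega l A Delta m cls Hm HDirr i (n * m) w x
        ltac:(nia) Hw Ha HC Hi) as [z [HzO Hag]].
      assert (Hpw : InSigmaA l A (prep w x)) by (eapply prep_Sigma; eauto).
      specialize (HN (prep w x) z Hpw (Omega_Sigma _ _ HzO) ltac:(eapply agree_mono; [apply Hag|nia])).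
      rewrite (HB z HzO), Rminus_0_r in HN. lra. }
    rewrite Hge, Rabs_mult, (Rabs_pos_eq (lam ^ n)) in Habs by (auto; lra).
    assert (lam ^ n * Rabs (g x) <= lam ^ n * (eps * B)).
    { eapply Rle_trans; [apply Habs|]. assert (0 <= eps) by lra.
      replace (lam ^ n * (eps * B)) with (eps * (B * lam ^ n)) by ring. apply Rmult_le_compat_l; auto. }
    apply Rmult_le_reg_l with (lam ^ n); auto. }
  destruct (Req_dec (g x) 0) as [E|E]; auto. exfalso.
  assert (Hpos : 0 < Rabs (g x)) by (apply Rabs_pos_lt; auto).
  assert (HBp : 0 < B). { specialize (Hsm 1 ltac:(lra)). lra. }
  specialize (Hsm (Rabs (g x) / (2 * B)) ltac:(apply Rdiv_lt_0_compat; lra)).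
  replace (Rabs (g x) / (2 * B) * B) with (Rabs (g x) / 2) in Hsm by (field; lra). lra. Qed.
End Uniq.

Lemma abs0 x : Rabs x <= 0 -> x = 0.
Proof. unfold Rabs. destruct (Rcase_abs x); intros; lra. Qed.

Section Main.
Variables (l : nat) (A : nat -> nat -> bool) (phi : seqn -> R)
  (Delta : nat -> bool) (m : nat) (cls : nat -> nat) (P : R)
  (h : nat -> seqn -> R) (nu : nat -> (seqn -> R) -> R).
Hypothesis Hphi : holder l A phi.
Hypothesis Hnorm : forall x, InSigmaA l A x -> Lphi l A phi one x = 1.
Hypothesis HDsub : forall i, Delta i = true -> (i < l)%nat.
Hypothesis HDirr : irreducible l A Delta.
Hypothesis Hm : (2 <= m)%nat.
Hypothesis Hcls_rng : forall i, Delta i = true -> (cls i < m)%nat.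
Hypothesis Hcls_cyc : forall i i', Delta i = true -> Delta i' = true -> A i i' = true ->
                cls i' = ((cls i + 1) mod m)%nat.
Hypothesis Hh : forall j, (j < m)%nat -> forall eps, 0 < eps -> exists N, forall n x,
          (N <= n)%nat -> InSigmaA l A x ->
          Rabs (exp (- (INR n * INR m * P)) * opiter (Lm l A phi Delta cls m j) n one x
                - h j x) < eps.
Hypothesis Hnu_prob : forall j, (j < m)%nat -> prob_functional l A (nu j).
Hypothesis Hnu_supp : forall j, (j < m)%nat -> supported_on_Omega l A Delta cls j (nu j).
Hypothesis Hnu_eig : forall j, (j < m)%nat -> forall psi, cont_on l A psi ->
               nu j (Lm l A phi Delta cls m j psi) = exp (INR m * P) * nu j psi.

Let Hm1 : (1 <= m)%nat. Proof. lia. Qed.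
Let Lj j := Lm l A phi Delta cls m j.
Let lm := lam m P.
Definition fn j n : seqn -> R := fun x => exp (- (INR n * INR m * P)) * opiter (Lm l A phi Delta cls m j) n one x.

Lemma lm_pos : 0 < lm.
Proof. unfold lm, lam. apply exp_pos. Qed.

Lemma key n : exp (- (INR n * INR m * P)) * lm ^ n = 1.
Proof. unfold lm, lam. rewrite exp_pow, <- exp_plus. replace (- (INR n * INR m * P) + INR n * (INR m * P)) with 0 by ring.
  apply exp_0. Qed.

Lemma Lm_cont j f : cont_on l A f -> cont_on l A (Lm l A phi Delta cls m j f).
Proof. intros. rewrite Lm_eq. apply Lgen_cont; auto. Qed.

Lemma opLm_cont j n f : cont_on l A f -> cont_on l A (opiter (Lm l A phi Delta cls m j) n f).
Proof. intros. apply opiter_cont; auto. apply Lm_cont. Qed.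

Lemma opLm_one j n x : InSigmaA l A x -> 0 <= opiter (Lm l A phi Delta cls m j) n one x <= 1.
Proof. intros Hx. rewrite opiter_Lm. split.
  - apply Lgen_pos; auto. intros; unfold one; lra.
  - apply Lgen_one_le1; auto. Qed.

Lemma fn_cont j n : cont_on l A (fn j n).
Proof. unfold fn. apply cont_scal. apply opLm_cont. apply cont_one. Qed.

Lemma h_cont j : (j < m)%nat -> cont_on l A (h j).
Proof. intros Hj. apply unif_lim_cont with (fn := fn j).
  - apply fn_cont.
  - intros eps He. destruct (Hh j Hj eps He) as [N HN]. exists N. intros x Hx. apply HN; auto. Qed.

Lemma h_nonneg j x : (j < m)%nat -> InSigmaA l A x -> 0 <= h j x.
Proof. intros Hj Hx. destruct (Rle_or_lt 0 (h j x)) as [H|H]; auto. exfalso.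
  destruct (Hh j Hj (- h j x) ltac:(lra)) as [N HN]. specialize (HN N x (le_n _) Hx).
  assert (0 <= exp (- (INR N * INR m * P)) * opiter (Lm l A phi Delta cls m j) N one x).
  { apply Rmult_le_pos; [left; apply exp_pos|apply opLm_one; auto]. }
  pose proof (Rle_abs (exp (- (INR N * INR m * P)) * opiter (Lm l A phi Delta cls m j) N one x - h j x)). lra. Qed.

Lemma h_bound j : (j < m)%nat -> exists H, forall x, InSigmaA l A x -> h j x <= H.
Proof. intros Hj. destruct (Hh j Hj 1 ltac:(lra)) as [N HN]. exists (exp (- (INR N * INR m * P)) + 1).
  intros x Hx. specialize (HN N x (le_n _) Hx). apply Rlt_le, Rabs_le_between in HN.
  destruct (opLm_one j N x Hx). pose proof (exp_pos (- (INR N * INR m * P))).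
  assert (exp (- (INR N * INR m * P)) * opiter (Lm l A phi Delta cls m j) N one x <= exp (- (INR N * INR m * P))).
  { rewrite <- (Rmult_1_r (exp _)) at 2. apply Rmult_le_compat_l; lra. }
  lra. Qed.

Lemma fn_step j n x : InSigmaA l A x ->
  Lm l A phi Delta cls m j (fn j n) x = lm * fn j (S n) x.
Proof. intros Hx. unfold fn. rewrite Lm_eq, Lgen_scal, <- Lm_eq.
  change (opiter (Lm l A phi Delta cls m j) (S n) one x) with
    (Lm l A phi Delta cls m j (opiter (Lm l A phi Delta cls m j) n one) x).
  rewrite <- Rmult_assoc. f_equal. unfold lm, lam. rewrite <- exp_plus. f_equal. rewrite S_INR. ring. Qed.

Lemma h_eig1 j x : (j < m)%nat -> InSigmaA l A x -> Lm l A phi Delta cls m j (h j) x = lm * h j x.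
Proof. intros Hj Hx. apply Rminus_diag_uniq. apply abs0.
  assert (Hl := lm_pos).
  assert (forall e, 0 < e -> Rabs (Lm l A phi Delta cls m j (h j) x - lm * h j x) <= e * (1 + lm)).
  { intros e He. destruct (Hh j Hj e He) as [N HN].
    assert (H1 : Rabs (Lm l A phi Delta cls m j (h j) x - Lm l A phi Delta cls m j (fn j N) x) <= e).
    { rewrite !Lm_eq. eapply Rle_trans. apply Lgen_diff; auto.
      - intros y Hy. rewrite Rabs_minus_sym. left. apply (HN N y (le_n _) Hy).
      - rewrite <- (Rmult_1_r e) at 2. apply Rmult_le_compat_l; [lra|]. apply Lgen_one_le1; auto. }
    rewrite fn_step in H1 by auto.
    assert (H2 : Rabs (fn j (S N) x - h j x) < e) by (apply HN; auto).
    replace (Lm l A phi Delta cls m j (h j) x - lm * h j x) with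
      ((Lm l A phi Delta cls m j (h j) x - lm * fn j (S N) x) + lm * (fn j (S N) x - h j x)) by ring.
    eapply Rle_trans; [apply Rabs_triang|]. rewrite Rabs_mult, (Rabs_pos_eq lm) by lra.
    assert (lm * Rabs (fn j (S N) x - h j x) <= lm * e) by (apply Rmult_le_compat_l; lra). lra. }
  apply Rnot_lt_le. intros Hc. set (a := Rabs (Lm l A phi Delta cls m j (h j) x - lm * h j x)) in *.
  specialize (H (a / (2 * (1 + lm))) ltac:(apply Rdiv_lt_0_compat; lra)).
  replace (a / (2 * (1 + lm)) * (1 + lm)) with (a / 2) in H by (field; lra). lra. Qed.

Lemma h_eig j n x : (j < m)%nat -> InSigmaA l A x -> opiter (Lm l A phi Delta cls m j) n (h j) x = lm ^ n * h j x.
Proof. intros Hj. revert x. induction n; intros x Hx.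
  - simpl. ring.
  - change (opiter (Lm l A phi Delta cls m j) (S n) (h j) x) with
      (Lm l A phi Delta cls m j (opiter (Lm l A phi Delta cls m j) n (h j)) x).
    rewrite Lm_eq. rewrite (Lgen_ext_Sigma _ _ _ _ _ _ (fun y => lm ^ n * h j y)) by auto.
    rewrite Lgen_scal, <- Lm_eq, h_eig1 by auto. simpl. ring. Qed.

Lemma growth j x : (j < m)%nat -> InSigmaA l A x -> exists B, forall N0, exists n, (N0 <= n)%nat /\ opiter (Lm l A phi Delta cls m j) n one x <= B * lm ^ n.
Proof. intros Hj Hx. destruct (Hh j Hj 1 ltac:(lra)) as [N HN]. exists (h j x + 1). intros N0.
  exists (max N N0). split; [lia|]. specialize (HN (max N N0) x ltac:(lia) Hx).
  apply Rlt_le, Rabs_le_between in HN. pose proof (key (max N N0)) as K.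
  assert (Hl : 0 < lm ^ (max N N0)) by (apply pow_lt, lm_pos).
  assert (opiter (Lm l A phi Delta cls m j) (max N N0) one x =
    (exp (- (INR (max N N0) * INR m * P)) * opiter (Lm l A phi Delta cls m j) (max N N0) one x) * lm ^ (max N N0)).
  { rewrite Rmult_comm, <- Rmult_assoc, (Rmult_comm (lm ^ _)), K. ring. }
  rewrite H. apply Rmult_le_compat_r; lra. Qed.

Lemma nu_eig_iter j n psi : (j < m)%nat -> cont_on l A psi ->
  nu j (opiter (Lm l A phi Delta cls m j) n psi) = lm ^ n * nu j psi.
Proof. intros Hj Hp. induction n.
  - simpl. ring.
  - change (opiter (Lm l A phi Delta cls m j) (S n) psi) with
      (Lm l A phi Delta cls m j (opiter (Lm l A phi Delta cls m j) n psi)).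
    rewrite Hnu_eig; auto. 2: apply opLm_cont; auto. rewrite IHn. unfold lm, lam. simpl. ring. Qed.

Lemma nu_h j : (j < m)%nat -> nu j (h j) = 1.
Proof. intros Hj. assert (Hn : forall n, nu j (fn j n) = 1).
  { intros n. unfold fn. rewrite (nu_scal l A); auto. 2: apply opLm_cont, cont_one.
    rewrite nu_eig_iter; auto. 2: apply cont_one. destruct (Hnu_prob j Hj) as [_ [_ [_ H4]]].
    rewrite H4, <- Rmult_assoc, key. ring. }
  apply Rminus_diag_uniq. apply abs0.
  apply Rnot_lt_le. intros Hc. set (a := Rabs (nu j (h j) - 1)) in *.
  destruct (Hh j Hj (a / 2) ltac:(lra)) as [N HN].
  assert (Rabs (nu j (h j) - nu j (fn j N)) <= a / 2).
  { apply nu_close with l A; auto. apply h_cont; auto. apply fn_cont.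
    intros x Hx. rewrite Rabs_minus_sym. left. apply HN; auto. }
  rewrite Hn in H. fold a in H. lra. Qed.

Lemma h_some j : (j < m)%nat -> exists z0, InOmega l A Delta cls j z0 /\ 0 < h j z0.
Proof. intros Hj. apply NNPP. intros Hn.
  assert (H0 : nu j (h j) = 0).
  { apply (Hnu_supp j Hj). apply h_cont; auto. intros x Hx.
    destruct (Rle_lt_or_eq_dec 0 (h j x)) as [Hp|Hp]; auto.
    - apply h_nonneg; auto. destruct Hx as [[Hx _] _]; auto.
    - exfalso. apply Hn. exists x. auto. }
  rewrite nu_h in H0; auto. lra. Qed.

Lemma main_sec j k x : (j < m)%nat -> InSigmaA l A x ->
  opiter (LDelta l A phi Delta) k (h j) x =
  nu ((j + k) mod m)%nat (opiter (LDelta l A phi Delta) k one) * h ((j + k) mod m)%nat x.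
Proof. intros Hj Hx.
  assert (Hi : ((j + k) mod m < m)%nat) by (apply Nat.mod_upper_bound; lia).
  set (i := ((j + k) mod m)%nat) in *.
  set (u := opiter (LDelta l A phi Delta) k (h j)).
  assert (LDc : forall f, cont_on l A f -> cont_on l A (opiter (LDelta l A phi Delta) k f)).
  { intros f Hf. rewrite opiter_LDelta. apply Lgen_cont; auto. }
  assert (Huc : cont_on l A u) by (apply LDc, h_cont; auto).
  assert (Hup : forall y, InSigmaA l A y -> 0 <= u y).
  { intros y Hy. unfold u. rewrite opiter_LDelta. apply Lgen_pos; auto. intros; apply h_nonneg; auto. }
  assert (Hue : forall n y, InSigmaA l A y -> opiter (Lm l A phi Delta cls m i) n u y = lam m P ^ n * u y).
  { intros n y Hy. unfold u, i. rewrite commute_iter; auto. rewrite !opiter_LDelta.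
    rewrite (Lgen_ext_Sigma _ _ _ _ _ _ (fun z => lm ^ n * h j z)); auto.
    - apply Lgen_scal.
    - intros z Hz. apply h_eig; auto. }
  destruct (uniq l A phi Delta m cls P Hphi Hm1 HDsub HDirr Hcls_rng Hcls_cyc i Hi u (h i) Huc
    (h_cont i Hi) Hup (fun y Hy => h_nonneg i y Hi Hy) (h_bound i Hi) (h_some i Hi) Hue
    (fun n y Hy => h_eig i n y Hi Hy) (fun y Hy => growth i y Hi Hy)) as [t Ht].
  assert (Hnut : nu i u = t).
  { rewrite (nu_ext l A (nu i) (Hnu_prob i Hi) u (fun y => t * h i y)); auto.
    - rewrite (nu_scal l A); auto. rewrite nu_h; auto. ring. apply h_cont; auto.
    - apply cont_scal, h_cont; auto. }
  assert (Hnu2 : nu i u = nu i (opiter (LDelta l A phi Delta) k one)).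
  { apply Rminus_diag_uniq. apply abs0. apply Rnot_lt_le. intros Hc.
    set (a := Rabs (nu i u - nu i (opiter (LDelta l A phi Delta) k one))) in *.
    destruct (Hh j Hj (a / 2) ltac:(lra)) as [N HN].
    set (g := opiter (LDelta l A phi Delta) k (fn j N)).
    assert (Hg : nu i g = nu i (opiter (LDelta l A phi Delta) k one)).
    { assert (E : g = fun y => exp (- (INR N * INR m * P)) *
          opiter (Lm l A phi Delta cls m i) N (opiter (LDelta l A phi Delta) k one) y).
      { unfold g, i. rewrite commute_iter; auto. apply functional_extensionality; intros y.
        unfold fn. rewrite !opiter_LDelta. apply Lgen_scal. }
      rewrite E. rewrite (nu_scal l A); auto. 2: apply opLm_cont, LDc, cont_one.
      rewrite nu_eig_iter; auto. 2: apply LDc, cont_one. rewrite <- Rmult_assoc. fold lm. rewrite key. ring. }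
    assert (Hcl : Rabs (nu i u - nu i g) <= a / 2).
    { apply nu_close with l A; auto. apply LDc, fn_cont.
      intros y Hy. unfold u, g. rewrite !opiter_LDelta. eapply Rle_trans. apply Lgen_diff; auto.
      - intros z Hz. rewrite Rabs_minus_sym. left. apply HN; auto.
      - rewrite <- (Rmult_1_r (a / 2)) at 2. apply Rmult_le_compat_l; [lra|]. apply Lgen_one_le1; auto. }
    rewrite Hg in Hcl. fold a in Hcl. lra. }
  rewrite <- Hnu2, Hnut. apply Ht; auto. Qed.
End Main.


Theorem mainTheorem4
  (l : nat) (A : nat -> nat -> bool) (phi : seqn -> R)
  (Delta : nat -> bool) (m : nat) (cls : nat -> nat) (P : R)
  (h : nat -> seqn -> R) (nu : nat -> (seqn -> R) -> R)
  (* A irreducible aperiodic *)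
  (HAirr : irreducible l A (fullV l))
  (HAaper : aperiodic l A)
  (* phi Hoelder and normalised *)
  (Hphi : holder l A phi)
  (Hnorm : forall x, InSigmaA l A x -> Lphi l A phi one x = 1)
  (* Delta a proper subset of V, A|Delta irreducible of period m >= 2 *)
  (HDsub : forall i, Delta i = true -> (i < l)%nat)
  (HDproper : exists i, (i < l)%nat /\ Delta i = false)
  (HDne : exists i, Delta i = true)
  (HDirr : irreducible l A Delta)
  (Hm : (2 <= m)%nat)
  (HDper : forall i, Delta i = true -> is_period l A Delta i m)
  (* cyclic decomposition Delta_s = {i in Delta : cls i = s} *)
  (Hcls_rng : forall i, Delta i = true -> (cls i < m)%nat)
  (Hcls_cyc : forall i i', Delta i = true -> Delta i' = true -> A i i' = true ->
                cls i' = ((cls i + 1) mod m)%nat)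
  (* P = P_Delta *)
  (HP : is_pressure l A Delta phi P)
  (* h_j = uniform limit of e^{-nmP} (L^{(m)}_j)^n 1 on Sigma_A^+ *)
  (Hh : forall j, (j < m)%nat -> forall eps, 0 < eps -> exists N, forall n x,
          (N <= n)%nat -> InSigmaA l A x ->
          Rabs (exp (- (INR n * INR m * P)) * opiter (Lm l A phi Delta cls m j) n one x
                - h j x) < eps)
  (* nu_j : Borel probability supported on Omega_j with the eigen-equation *)
  (Hnu_prob : forall j, (j < m)%nat -> prob_functional l A (nu j))
  (Hnu_supp : forall j, (j < m)%nat -> supported_on_Omega l A Delta cls j (nu j))
  (Hnu_eig : forall j, (j < m)%nat -> forall psi, cont_on l A psi ->
               nu j (Lm l A phi Delta cls m j psi) = exp (INR m * P) * nu j psi) :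
  forall j k, (j < m)%nat -> (1 <= k)%nat ->
  forall x, InSigmaA l A x ->
    opiter (LDelta l A phi Delta) k (h j) x =
    nu ((j + k) mod m)%nat (opiter (LDelta l A phi Delta) k one)
    * h ((j + k) mod m)%nat x.
Proof.
  intros j k Hj Hk x Hx. eapply main_sec; eauto.
Qed.
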